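(* Fix $K>0$, $t>0$, $\rho,\kappa_0,\theta\in\mathbb R$, and let $h(x)=\max\{e^x-K,0\}$. For $\tau>0$ and a function $f(x,\sigma)$ set $(e^{\tau L_0}f)(x,\sigma)=\int_{\mathbb R}\phi_\tau(x-y,\sigma)f(y,\sigma)\,dy$, where $$\phi_\tau(x,\sigma)=\frac{1}{\sigma\sqrt{2\pi\tau}}\exp\Big(-\tfrac12\Big(\tfrac{x}{\sigma\sqrt\tau}-\tfrac{\sigma\sqrt\tau}{2}\Big)^2\Big),$$ and $e^{0L_0}=\mathrm{id}$. With $L_1=\rho\sigma^2\partial_x\partial_\sigma+\kappa_0(\theta-\sigma)\partial_\sigma$ and $L_2=\frac12\sigma^2\partial_\sigma^2$, define $$F_1=\int_0^t e^{(t-\tau)L_0}L_1e^{\tau L_0}h\,d\tau,$$ $$F_2=\int_0^t e^{(t-\tau_1)L_0}L_2e^{\tau_1L_0}h\,d\tau_1+\int_0^t\!\!\int_0^{\tau_1}e^{(t-\tau_1)L_0}L_1e^{(\tau_1-\tau_2)L_0}L_1e^{\tau_2L_0}h\,d\tau_2\,d\tau_1,$$ as functions of $(x,\sigma)\in\mathbb R\times(0,\infty)$. Let $d_-=\frac{x-\ln K}{\sigma\sqrt t}-\frac{\sigma\sqrt t}{2}$, $N'(z)=(2\pi)^{-1/2}e^{-z^2/2}$, and let $H_n$ be the probabilists' Hermite polynomials $H_n(z)=(-1)^ne^{z^2/2}\partial_z^ne^{-z^2/2}$. Then $$F_1=\frac{Kt}{2}\big(\kappa_0(\theta-\sigma)\sqrt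 t-\rho\sigma d_-\big)N'(d_-),$$ and $$F_2=K\sum_{i=0}^4 a_{2i}\Big(-\frac{1}{\sigma\sqrt t}\Big)^iH_i(d_-)\,\frac{N'(d_-)}{\sigma\sqrt t},$$ where $a_{20}=\frac{t^2\sigma^2}{4}+\frac{t^3\kappa_0^2}{6}(\theta-\sigma)(\theta-2\sigma)$, $a_{21}=-\frac{t^3\sigma^4}{6}+\frac{t^3\kappa_0\rho\sigma^2}{6}(4\theta-5\sigma)-\frac{t^4\kappa_0^2\sigma^2}{8}(\theta-\sigma)^2$, $a_{22}=\frac{t^3\sigma^4}{6}+\frac{t^3\rho^2\sigma^4}{2}+\frac{t^4\kappa_0^2\sigma^2}{8}(\theta-\sigma)^2-\frac{t^4\kappa_0\rho\sigma^4}{4}(\theta-\sigma)$, $a_{23}=\frac{t^4\kappa_0\rho\sigma^4}{4}(\theta-\sigma)-\frac{t^4\rho^2\sigma^6}{8}$, $a_{24}=\frac{t^4\rho^2\sigma^6}{8}$.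
   Context: These are the coefficients of $\nu$ and $\nu^2$ in the Duhamel–Dyson expansion of the solution of the $\lambda$SABR equation $\partial_t u=\sigma^2[\frac12(\partial_x^2u-\partial_xu)+\nu\rho\partial_x\partial_\sigma u+\frac12\nu^2\partial_\sigma^2u]+\nu\kappa_0(\theta-\sigma)\partial_\sigma u$, $u(0)=h$, whose generator is $L_0+\nu L_1+\nu^2L_2$ with $L_0=\frac12\sigma^2(\partial_x^2-\partial_x)$; the operator $e^{\tau L_0}$ is the heat semigroup of $L_0$ (convolution in $x$ with $\sigma$ as parameter). *)

(* Defs.v *)
From Stdlib Require Import Reals Lra ClassicalEpsilon.
Open Scope R_scope.

Definition improper_integral (g : R -> R) (l : R) : Prop :=
  forall eps, 0 < eps -> exists M, forall a b, a <= - M -> M <= b ->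
    exists pr : Riemann_integrable g a b, Rabs (RiemannInt pr - l) < eps.

Definition int_R (g : R -> R) : R :=
  epsilon (inhabits 0) (improper_integral g).

Definition int_ab (g : R -> R) (a b : R) : R :=
  epsilon (inhabits 0)
    (fun v => exists pr : Riemann_integrable g a b, RiemannInt pr = v).

Definition deriv1 (f : R -> R) (z : R) : R :=
  epsilon (inhabits 0) (derivable_pt_lim f z).

Definition Dx (f : R -> R -> R) (x s : R) : R := deriv1 (fun y => f y s) x.
Definition Ds (f : R -> R -> R) (x s : R) : R := deriv1 (fun u => f x u) s.

Definition phi (tau x s : R) : R :=
  / (s * sqrt (2 * PI * tau)) *
  exp (- / 2 * (x / (s * sqrt tau) - s * sqrt tau / 2) ^ 2).

Definition heat (tau : R) (f : R -> R -> R) (x s : R) : R :=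
  if Rle_dec tau 0 then f x s
  else int_R (fun y => phi tau (x - y) s * f y s).

Definition L1 (rho k0 theta : R) (f : R -> R -> R) (x s : R) : R :=
  rho * s ^ 2 * Dx (Ds f) x s + k0 * (theta - s) * Ds f x s.

Definition L2 (f : R -> R -> R) (x s : R) : R :=
  / 2 * s ^ 2 * Ds (Ds f) x s.

Definition payoff (K : R) (x s : R) : R := Rmax (exp x - K) 0.

Definition F1 (rho k0 theta t K : R) (x s : R) : R :=
  int_ab (fun tau => heat (t - tau) (L1 rho k0 theta (heat tau (payoff K))) x s) 0 t.

Definition F2 (rho k0 theta t K : R) (x s : R) : R :=
  int_ab (fun t1 => heat (t - t1) (L2 (heat t1 (payoff K))) x s) 0 t
  + int_ab (fun t1 =>
      int_ab (fun t2 =>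
        heat (t - t1)
          (L1 rho k0 theta (heat (t1 - t2) (L1 rho k0 theta (heat t2 (payoff K)))))
          x s) 0 t1) 0 t.

Fixpoint nderiv (n : nat) (f : R -> R) : R -> R :=
  match n with
  | O => f
  | S m => fun z => deriv1 (nderiv m f) z
  end.

Definition Hermite (n : nat) (z : R) : R :=
  (-1) ^ n * exp (z ^ 2 / 2) * nderiv n (fun w => exp (- (w ^ 2) / 2)) z.

Definition Nprime (z : R) : R := / sqrt (2 * PI) * exp (- (z ^ 2) / 2).

Definition d_minus (K t x s : R) : R :=
  (x - ln K) / (s * sqrt t) - s * sqrt t / 2.

Definition a2 (rho k0 theta t s : R) (i : nat) : R :=
  match i with
  | 0%nat => t ^ 2 * s ^ 2 / 4 + t ^ 3 * k0 ^ 2 / 6 * (theta - s) * (theta - 2 * s)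
  | 1%nat => - (t ^ 3 * s ^ 4 / 6) + t ^ 3 * k0 * rho * s ^ 2 / 6 * (4 * theta - 5 * s)
             - t ^ 4 * k0 ^ 2 * s ^ 2 / 8 * (theta - s) ^ 2
  | 2%nat => t ^ 3 * s ^ 4 / 6 + t ^ 3 * rho ^ 2 * s ^ 4 / 2
             + t ^ 4 * k0 ^ 2 * s ^ 2 / 8 * (theta - s) ^ 2
             - t ^ 4 * k0 * rho * s ^ 4 / 4 * (theta - s)
  | 3%nat => t ^ 4 * k0 * rho * s ^ 4 / 4 * (theta - s) - t ^ 4 * rho ^ 2 * s ^ 6 / 8
  | 4%nat => t ^ 4 * rho ^ 2 * s ^ 6 / 8
  | _ => 0
  end.

(* Main.v *)
Require Import Defs.
From Stdlib Require Import Reals Lra Lia ClassicalEpsilon FunctionalExtensionality.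
From Coquelicot Require Import Coquelicot.
Open Scope R_scope.

Lemma deriv1_eq f z l : derivable_pt_lim f z l -> deriv1 f z = l.
Proof.
  intros H. unfold deriv1.
  assert (E : exists l, derivable_pt_lim f z l) by (exists l; exact H).
  pose proof (epsilon_spec (inhabits 0) _ E) as H2.
  eapply uniqueness_limite; eauto.
Qed.

Lemma deriv1_is f z l : is_derive f z l -> deriv1 f z = l.
Proof. intros H; apply deriv1_eq, is_derive_Reals; exact H. Qed.

Lemma int_ab_eq f a b v : is_RInt f a b v -> int_ab f a b = v.
Proof.
  intros H. unfold int_ab.
  assert (Hex : ex_RInt f a b) by (exists v; exact H).
  assert (E : exists v, exists pr : Riemann_integrable f a b, RiemannInt pr = v).
  { exists (RiemannInt (ex_RInt_Reals_0 _ _ _ Hex)). eexists; reflexivity. }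
  destruct (epsilon_spec (inhabits 0) _ E) as [pr Hpr].
  rewrite <- Hpr, <- RInt_Reals. apply is_RInt_unique; exact H.
Qed.

Lemma improper_unique g l1 l2 : improper_integral g l1 -> improper_integral g l2 -> l1 = l2.
Proof.
  intros H1 H2.
  apply Rle_antisym; apply Rnot_lt_le; intro Hl.
  - destruct (H1 ((l1 - l2)/2)) as [M1 HM1]; [lra|].
    destruct (H2 ((l1 - l2)/2)) as [M2 HM2]; [lra|].
    set (M := Rmax (Rabs M1) (Rabs M2)).
    assert (A1 : M1 <= M) by (unfold M; eapply Rle_trans; [apply Rle_abs| apply Rmax_l]).
    assert (A2 : M2 <= M) by (unfold M; eapply Rle_trans; [apply Rle_abs| apply Rmax_r]).
    destruct (HM1 (-M) M) as [p1 Hp1]; try lra.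
    destruct (HM2 (-M) M) as [p2 Hp2]; try lra.
    rewrite <- RInt_Reals in Hp1, Hp2.
    apply Rabs_def2 in Hp1; apply Rabs_def2 in Hp2; lra.
  - destruct (H1 ((l2 - l1)/2)) as [M1 HM1]; [lra|].
    destruct (H2 ((l2 - l1)/2)) as [M2 HM2]; [lra|].
    set (M := Rmax (Rabs M1) (Rabs M2)).
    assert (A1 : M1 <= M) by (unfold M; eapply Rle_trans; [apply Rle_abs| apply Rmax_l]).
    assert (A2 : M2 <= M) by (unfold M; eapply Rle_trans; [apply Rle_abs| apply Rmax_r]).
    destruct (HM1 (-M) M) as [p1 Hp1]; try lra.
    destruct (HM2 (-M) M) as [p2 Hp2]; try lra.
    rewrite <- RInt_Reals in Hp1, Hp2.
    apply Rabs_def2 in Hp1; apply Rabs_def2 in Hp2; lra.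
Qed.

Lemma int_R_eq g l : improper_integral g l -> int_R g = l.
Proof.
  intros H. unfold int_R.
  assert (E : exists l, improper_integral g l) by (exists l; exact H).
  pose proof (epsilon_spec (inhabits 0) _ E) as H2.
  eapply improper_unique; eauto.
Qed.

Lemma lim_p_spec F L eps : is_lim F p_infty (Finite L) -> 0 < eps ->
  exists M, forall y, M <= y -> Rabs (F y - L) < eps.
Proof.
  intros H He. apply is_lim_spec in H.
  destruct (H (mkposreal eps He)) as [M HM].
  exists (M+1). intros y Hy. apply HM. lra.
Qed.

Lemma lim_m_spec F L eps : is_lim F m_infty (Finite L) -> 0 < eps ->
  exists M, forall y, y <= - M -> Rabs (F y - L) < eps.
Proof.
  intros H He. apply is_lim_spec in H.
  destruct (H (mkposreal eps He)) as [M HM].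
  exists (-M+1). intros y Hy. apply HM. lra.
Qed.

Lemma improper_of_is_RInt f l :
  (forall eps, 0 < eps -> exists M, forall a b, a <= -M -> M <= b ->
     exists v, is_RInt f a b v /\ Rabs (v - l) < eps) ->
  improper_integral f l.
Proof.
  intros H eps He. destruct (H eps He) as [M HM]. exists M. intros a b Ha Hb.
  destruct (HM a b Ha Hb) as [v [Hv Hl]].
  assert (Hex : ex_RInt f a b) by (exists v; exact Hv).
  exists (ex_RInt_Reals_0 _ _ _ Hex). rewrite <- RInt_Reals.
  rewrite (is_RInt_unique _ _ _ _ Hv). exact Hl.
Qed.

Lemma imp_antideriv f F L1 L2 :
  (forall y, is_derive F y (f y)) -> (forall y, continuous f y) ->
  is_lim F m_infty (Finite L1) -> is_lim F p_infty (Finite L2) ->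
  improper_integral f (L2 - L1).
Proof.
  intros HD HC H1 H2. apply improper_of_is_RInt.
  intros eps He.
  destruct (lim_m_spec _ _ (eps/2) H1) as [M1 HM1]; [lra|].
  destruct (lim_p_spec _ _ (eps/2) H2) as [M2 HM2]; [lra|].
  exists (Rmax (Rmax M1 M2) 0). intros a b Ha Hb.
  assert (Hab : a <= b) by (pose proof (Rmax_r (Rmax M1 M2) 0); lra).
  exists (F b - F a). split.
  - apply (is_RInt_derive F f); intros; [apply HD| apply HC].
  - assert (a <= - M1) by (pose proof (Rmax_l (Rmax M1 M2) 0); pose proof (Rmax_l M1 M2); lra).
    assert (M2 <= b) by (pose proof (Rmax_l (Rmax M1 M2) 0); pose proof (Rmax_r M1 M2); lra).
    specialize (HM1 a H). specialize (HM2 b H0).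
    apply Rabs_def2 in HM1; apply Rabs_def2 in HM2. apply Rabs_def1; lra.
Qed.

Lemma int_R_antideriv f F L1 L2 :
  (forall y, is_derive F y (f y)) -> (forall y, continuous f y) ->
  is_lim F m_infty (Finite L1) -> is_lim F p_infty (Finite L2) ->
  int_R f = L2 - L1.
Proof. intros; apply int_R_eq; eapply imp_antideriv; eauto. Qed.

Lemma improper_scal f l k : improper_integral f l -> improper_integral (fun y => k * f y) (k * l).
Proof.
  intros H. apply improper_of_is_RInt. intros eps He.
  destruct (H (eps / (Rabs k + 1))) as [M HM].
  { apply Rdiv_lt_0_compat; [lra| pose proof (Rabs_pos k); lra]. }
  exists M. intros a b Ha Hb. destruct (HM a b Ha Hb) as [pr Hpr].
  exists (k * RiemannInt pr). split.
  - rewrite <- RInt_Reals. apply (is_RInt_scal (V:=R_NormedModule) f a b k).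
    apply (RInt_correct (V:=R_CompleteNormedModule)). apply ex_RInt_Reals_1; exact pr.
  - replace (k * RiemannInt pr - k * l) with (k * (RiemannInt pr - l)) by ring.
    rewrite Rabs_mult. pose proof (Rabs_pos k). pose proof (Rabs_pos (RiemannInt pr - l)).
    apply Rle_lt_trans with ((Rabs k + 1) * Rabs (RiemannInt pr - l)). nra.
    apply Rmult_lt_reg_l with (/ (Rabs k + 1)). apply Rinv_0_lt_compat; lra.
    rewrite <- Rmult_assoc, Rinv_l by lra. rewrite Rmult_1_l.
    unfold Rdiv in Hpr. rewrite Rmult_comm. exact Hpr.
Qed.

Lemma int_R_antideriv_half f G p L :
  (forall y, p <= y -> is_derive G y (f y)) -> (forall y, continuous f y) ->
  (forall y, y <= p -> f y = 0) ->
  is_lim G p_infty (Finite L) ->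
  int_R f = L - G p.
Proof.
  intros HD HC H0 H2. apply int_R_eq, improper_of_is_RInt.
  intros eps He.
  destruct (lim_p_spec _ _ (eps) H2) as [M2 HM2]; [lra|].
  exists (Rmax (Rmax (Rabs p) M2) 0). intros a b Ha Hb.
  pose proof (Rmax_l (Rmax (Rabs p) M2) 0). pose proof (Rmax_r (Rabs p) M2).
  pose proof (Rmax_l (Rabs p) M2). pose proof (Rabs_le_between p) as Hp.
  pose proof (Rle_abs p). pose proof (Rabs_pos p).
  assert (Hap : a <= p). { pose proof (Rle_abs (-p)) as Hq. rewrite Rabs_Ropp in Hq. lra. }
  assert (Hpb : p <= b) by lra.
  exists (plus (scal (p - a) 0) (minus (G b) (G p))). split.
  - apply (is_RInt_Chasles f a p b).
    + apply is_RInt_ext with (fun _ => 0).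
      * intros y Hy. rewrite Rmin_left in Hy by lra. rewrite Rmax_right in Hy by lra.
        symmetry; apply H0; lra.
      * assert (Hc := is_RInt_const (V:=R_NormedModule) a p 0).
        eapply is_RInt_ext; [| exact Hc]. intros; reflexivity.
    + apply (is_RInt_derive G f); intros y Hy.
      * rewrite Rmin_left in Hy by lra. apply HD; lra.
      * apply HC.
  - change (plus (scal (p - a) 0) (minus (G b) (G p))) with ((p - a) * 0 + (G b + - G p)).
    specialize (HM2 b ltac:(lra)). replace ((p - a) * 0 + (G b + - G p) - (L - G p)) with (G b - L) by ring. exact HM2.
Qed.

Lemma lim_bound f :
  (exists C M0, 0 < M0 /\ forall y, M0 <= Rabs y -> Rabs (f y) <= C / Rabs y) ->
  is_lim f p_infty 0 /\ is_lim f m_infty 0.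
Proof.
  intros [C [M0 [HM0 H]]].
  assert (HC : 0 <= C).
  { specialize (H M0). rewrite (Rabs_right M0) in H by lra.
    assert (0 <= C / M0) by (eapply Rle_trans; [apply Rabs_pos| apply H; lra]).
    apply Rmult_le_reg_r with (/ M0). apply Rinv_0_lt_compat; lra. lra. }
  split; apply is_lim_spec; intros eps;
  assert (0 <= C/eps) by (apply Rdiv_le_0_compat; [lra| apply cond_pos]).
  - exists (M0 + C / eps + 1). intros y Hy.
    assert (Hy0 : 0 < y). { lra. }
    rewrite Rminus_0_r. eapply Rle_lt_trans. apply H. rewrite Rabs_right; lra.
    rewrite Rabs_right by lra.
    apply Rmult_lt_reg_r with y; [lra|]. unfold Rdiv. rewrite Rmult_assoc, Rinv_l by lra.
    pose proof (cond_pos eps) as Hep.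
    assert (Hlt : C / eps < y) by lra.
    apply (Rmult_lt_compat_l eps) in Hlt; [|lra].
    unfold Rdiv in Hlt. replace (eps * (C * / eps)) with C in Hlt by (field; lra). lra.
  - exists (-(M0 + C / eps + 1)). intros y Hy.
    assert (Hy0 : 0 < -y). { lra. }
    rewrite Rminus_0_r. eapply Rle_lt_trans. apply H. rewrite Rabs_left; lra.
    rewrite Rabs_left by lra.
    apply Rmult_lt_reg_r with (-y); [lra|]. unfold Rdiv. rewrite Rmult_assoc, Rinv_l by lra.
    pose proof (cond_pos eps) as Hep.
    assert (Hlt : C / eps < -y) by lra.
    apply (Rmult_lt_compat_l eps) in Hlt; [|lra].
    unfold Rdiv in Hlt. replace (eps * (C * / eps)) with C in Hlt by (field; lra). lra.
Qed.

Lemma exp_mult_n v n : exp (INR n * v) = exp v ^ n.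
Proof.
  induction n as [|n IH]. simpl. rewrite Rmult_0_l, exp_0; reflexivity.
  rewrite S_INR, Rmult_plus_distr_r, Rmult_1_l, exp_plus, IH. simpl. ring.
Qed.

Lemma exp_ge_pow u n : 0 <= u -> (0 < n)%nat -> (u / INR n) ^ n <= exp u.
Proof.
  intros Hu Hn. assert (HnR : 0 < INR n) by (apply lt_0_INR; exact Hn).
  replace u with (INR n * (u / INR n)) at 2 by (field; lra).
  rewrite exp_mult_n. apply pow_incr. split.
  apply Rdiv_le_0_compat; lra. pose proof (exp_ineq1_le (u / INR n)); lra.
Qed.

Lemma tail_bound j V w : 0 < V -> 1 <= Rabs w ->
  Rabs (w ^ j * exp (- (w ^ 2) / (2 * V))) <= (2 * V * INR (S j)) ^ (S j) / Rabs w.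
Proof.
  intros HV Hw.
  set (n := S j). set (u := w ^ 2 / (2 * V)).
  assert (Hw2 : w ^ 2 = Rabs w ^ 2) by (rewrite pow2_abs; reflexivity).
  assert (Hu : 0 < u). { unfold u. apply Rdiv_lt_0_compat; [|lra]. rewrite Hw2. apply pow_lt; lra. }
  assert (HnR : 0 < INR n) by (apply lt_0_INR; unfold n; lia).
  pose proof (exp_ge_pow u n (Rlt_le _ _ Hu) ltac:(unfold n; lia)) as He.
  assert (Hpos : 0 < (u / INR n) ^ n) by (apply pow_lt; apply Rdiv_lt_0_compat; lra).
  rewrite Rabs_mult, (Rabs_right (exp _)) by (apply Rle_ge, Rlt_le, exp_pos).
  replace (- w ^ 2 / (2 * V)) with (- u) by (unfold u; field; lra).
  rewrite exp_Ropp. rewrite <- RPow_abs.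
  assert (Hinv : / exp u <= / (u / INR n) ^ n) by (apply Rinv_le_contravar; lra).
  assert (Ha : 0 < Rabs w) by lra.
  apply Rle_trans with (Rabs w ^ j * / (u / INR n) ^ n).
  { apply Rmult_le_compat_l; [apply pow_le; lra| exact Hinv]. }
  replace (Rabs w ^ j * / (u / INR n) ^ n) with ((2 * V * INR n) ^ n / (Rabs w ^ (j + 2))).
  2: { replace (u / INR n) with (Rabs w ^ 2 * / (2 * V * INR n)) by (unfold u; rewrite Hw2; field; lra).
       rewrite (Rpow_mult_distr (Rabs w ^ 2)), <- pow_mult, pow_inv.
       replace (Rabs w ^ (2 * n)) with (Rabs w ^ (j + 2) * Rabs w ^ j)
         by (rewrite <- pow_add; f_equal; unfold n; lia).
       assert (Rabs w ^ j <> 0) by (apply pow_nonzero; lra).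
       assert (Rabs w ^ (j+2) <> 0) by (apply pow_nonzero; lra).
       assert ((2 * V * INR n) ^ n <> 0) by (apply pow_nonzero; apply Rgt_not_eq; apply Rmult_lt_0_compat; lra).
       field. auto. }
  unfold Rdiv. apply Rmult_le_compat_l. apply pow_le. apply Rmult_le_pos; lra.
  apply Rinv_le_contravar; [lra|]. rewrite pow_add.
  replace (Rabs w) with (1 * Rabs w) at 1 by ring.
  apply Rmult_le_compat; try lra. apply pow_R1_Rle; lra.
  simpl. replace (Rabs w) with (Rabs w * 1 * 1) at 1 by ring.
  apply Rmult_le_compat; try nra.
Qed.

Lemma lim_shift_gauss j V m : 0 < V ->
  is_lim (fun y => (y - m) ^ j * exp (- ((y - m) ^ 2) / (2 * V))) p_infty 0 /\
  is_lim (fun y => (y - m) ^ j * exp (- ((y - m) ^ 2) / (2 * V))) m_infty 0.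
Proof.
  intros HV. apply lim_bound.
  exists (2 * (2 * V * INR (S j)) ^ (S j)), (2 * Rabs m + 2). split.
  pose proof (Rabs_pos m); lra.
  intros y Hy.
  assert (Hym : Rabs y / 2 <= Rabs (y - m)).
  { pose proof (Rabs_triang_inv y m). pose proof (Rabs_pos m). lra. }
  assert (Hy1 : 1 <= Rabs (y - m)) by (pose proof (Rabs_pos m); lra).
  eapply Rle_trans. apply tail_bound; assumption.
  assert (HC : 0 <= (2 * V * INR (S j)) ^ S j) by (apply pow_le; apply Rmult_le_pos; [lra| apply pos_INR]).
  assert (0 < Rabs y) by (pose proof (Rabs_pos m); lra).
  unfold Rdiv. replace (2 * (2 * V * INR (S j)) ^ S j * / Rabs y) with
    ((2 * V * INR (S j)) ^ S j * / (Rabs y / 2)) by (field; lra).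
  apply Rmult_le_compat_l; [exact HC|]. apply Rinv_le_contravar; lra.
Qed.

Lemma cont_ed (f : R -> R) y : ex_derive f y -> continuous f y.
Proof. intros H. apply (ex_derive_continuous (K:=R_AbsRing) (V:=R_NormedModule)). exact H. Qed.

Lemma exp_le_mono a b : a <= b -> exp a <= exp b.
Proof. intros [H|H]. apply Rlt_le, exp_increasing, H. subst; apply Rle_refl. Qed.

Definition gau (u : R) : R := exp (- (u ^ 2) / 2).

Lemma gau_cont y : continuous gau y.
Proof. apply cont_ed. unfold gau. auto_derive. auto. Qed.

Lemma ex_RInt_gau a b : ex_RInt gau a b.
Proof. apply (ex_RInt_continuous (V:=R_CompleteNormedModule)). intros; apply gau_cont. Qed.

Definition Phi0 (w : R) : R := RInt gau 0 w.

Lemma Phi0_deriv w : is_derive Phi0 w (gau w).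
Proof.
  apply is_derive_RInt with 0.
  - apply filter_forall. intros b. apply (RInt_correct (V:=R_CompleteNormedModule)), ex_RInt_gau.
  - apply gau_cont.
Qed.

Definition hh (x t : R) : R := exp (- (x ^ 2 * (1 + t ^ 2)) / 2) / (1 + t ^ 2).
Definition gg (x : R) : R := RInt (fun t => hh x t) 0 1.

Lemma onept t : 0 < 1 + t ^ 2.
Proof. pose proof (pow2_ge_0 t). lra. Qed.

Lemma hh_deriv u v : is_derive (fun z => hh z v) u (- u * exp (- (u ^ 2 * (1 + v ^ 2)) / 2)).
Proof.
  unfold hh. auto_derive. pose proof (onept v). lra.
  pose proof (onept v). unfold Rdiv; simpl. field. simpl in H; lra.
Qed.

Lemma cont2d_hh x t :
  continuity_2d_pt (fun u v => Derive (fun z => hh z v) u) x t.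
Proof.
  apply continuity_2d_pt_ext with (fun u v => - u * exp (- (u ^ 2 * (1 + v ^ 2)) / 2)).
  { intros u v. symmetry. apply is_derive_unique, hh_deriv. }
  apply continuity_2d_pt_mult.
  apply continuity_2d_pt_opp, continuity_2d_pt_id1.
  apply continuity_1d_2d_pt_comp with (f := exp) (g := fun u v => - (u ^ 2 * (1 + v ^ 2)) / 2).
  apply derivable_continuous_pt, derivable_pt_exp.
  apply continuity_2d_pt_ext with (fun u v => (u * u * (1 + v * v)) * (-/2)).
  { intros; field. }
  apply continuity_2d_pt_mult; [| apply continuity_2d_pt_const].
  apply continuity_2d_pt_mult.
  apply continuity_2d_pt_mult; apply continuity_2d_pt_id1.
  apply continuity_2d_pt_plus; [apply continuity_2d_pt_const|].
  apply continuity_2d_pt_mult; apply continuity_2d_pt_id2.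
Qed.

Lemma ex_RInt_hh x : ex_RInt (fun t => hh x t) 0 1.
Proof.
  apply (ex_RInt_continuous (V:=R_CompleteNormedModule)). intros z _. apply cont_ed.
  unfold hh. auto_derive. pose proof (onept z). lra.
Qed.

Definition II (x : R) : R := RInt (fun t => exp (- (x ^ 2 * (1 + t ^ 2)) / 2)) 0 1.

Lemma ex_RInt_II x : ex_RInt (fun t => exp (- (x ^ 2 * (1 + t ^ 2)) / 2)) 0 1.
Proof.
  apply (ex_RInt_continuous (V:=R_CompleteNormedModule)). intros z _. apply cont_ed. auto_derive. auto.
Qed.

Lemma gg_deriv x : is_derive gg x (- x * II x).
Proof.
  unfold gg.
  assert (H := is_derive_RInt_param hh 0 1 x).
  replace (- x * II x) with (RInt (fun t => Derive (fun u => hh u t) x) 0 1).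
  apply H.
  - apply filter_forall. intros x0 t _. eexists. apply hh_deriv.
  - intros; apply cont2d_hh.
  - apply filter_forall. intros; apply ex_RInt_hh.
  - rewrite (RInt_ext (V:=R_CompleteNormedModule)) with (g := fun t => scal (-x) (exp (- (x ^ 2 * (1 + t ^ 2)) / 2))).
    rewrite (RInt_scal (V:=R_CompleteNormedModule)). reflexivity. apply ex_RInt_II.
    intros t _. apply is_derive_unique, hh_deriv.
Qed.

Lemma xII x : x * II x = gau x * Phi0 x.
Proof.
  unfold II, Phi0.
  assert (Hex : ex_RInt (fun y => gau (x * y + 0)) 0 1).
  { apply (ex_RInt_continuous (V:=R_CompleteNormedModule)). intros z _. apply cont_ed. unfold gau. auto_derive. auto. }
  pose proof (RInt_comp_lin gau x 0 0 1 (ex_RInt_gau _ _)) as E.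
  replace (x * 0 + 0) with 0 in E by ring. replace (x * 1 + 0) with x in E by ring.
  rewrite <- E.
  rewrite (RInt_scal (V:=R_CompleteNormedModule)) by exact Hex.
  rewrite (RInt_ext (V:=R_CompleteNormedModule)) with (g := fun t => scal (gau x) (gau (x * t + 0))).
  2: { intros t _. unfold gau, scal; simpl; unfold mult; simpl. rewrite <- exp_plus. f_equal. field. }
  rewrite (RInt_scal (V:=R_CompleteNormedModule)) by exact Hex.
  unfold scal; simpl; unfold mult; simpl. ring.
Qed.

Lemma const_of_deriv0 F x : (forall y, is_derive F y 0) -> F x = F 0.
Proof.
  intros H.
  assert (H1 : is_RInt (fun _ => 0) 0 x (minus (F x) (F 0))).
  { apply (is_RInt_derive F (fun _ => 0)); intros. apply H. apply continuous_const. }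
  assert (H2 := is_RInt_const (V:=R_CompleteNormedModule) 0 x 0).
  apply (is_RInt_unique (V:=R_CompleteNormedModule)) in H1. apply (is_RInt_unique (V:=R_CompleteNormedModule)) in H2.
  rewrite H1 in H2. unfold minus, plus, opp, scal in H2; simpl in H2; unfold mult in H2; simpl in H2.
  lra.
Qed.

Lemma gg0 : gg 0 = PI / 4.
Proof.
  unfold gg.
  rewrite (RInt_ext (V:=R_CompleteNormedModule)) with (g := fun t => / (1 + t ^ 2)).
  2: { intros t _. unfold hh. replace (- (0 ^ 2 * (1 + t ^ 2)) / 2) with 0 by (simpl; field).
       rewrite exp_0. simpl. pose proof (onept t). simpl in H. field. lra. }
  rewrite (is_RInt_unique _ 0 1 (minus (atan 1) (atan 0))).
  rewrite atan_1, atan_0. unfold minus, plus, opp; simpl. ring.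
  apply (is_RInt_derive atan). intros; apply is_derive_Reals, derivable_pt_lim_atan.
  intros z _. apply cont_ed. auto_derive. pose proof (onept z); lra.
Qed.

Lemma key_const x : Phi0 x ^ 2 + 2 * gg x = PI / 2.
Proof.
  set (F := fun x => Phi0 x ^ 2 + 2 * gg x).
  change (F x = PI / 2).
  rewrite (const_of_deriv0 F x).
  - unfold F. unfold Phi0. rewrite RInt_point. rewrite gg0. unfold zero; simpl. field.
  - intros y. unfold F.
    apply is_derive_ext with (fun y => Phi0 y ^ 2 + 2 * gg y); [reflexivity|].
    replace 0 with (INR 2 * gau y * Phi0 y ^ Init.Nat.pred 2 + 2 * (- y * II y)).
    apply (is_derive_plus (fun y => Phi0 y ^ 2) (fun y => 2 * gg y)).
    apply (is_derive_pow Phi0 2 y (gau y)), Phi0_deriv.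
    apply (is_derive_scal gg y 2 (- y * II y)), gg_deriv.
    replace (- y * II y) with (- (y * II y)) by ring. rewrite xII. simpl. ring.
Qed.

Lemma gg_bounds x : 0 <= gg x <= gau x.
Proof.
  unfold gg. split.
  - apply RInt_ge_0. lra. apply ex_RInt_hh. intros t _. unfold hh.
    apply Rlt_le, Rdiv_lt_0_compat. apply exp_pos. apply onept.
  - replace (gau x) with (RInt (fun _ => gau x) 0 1).
    2: { rewrite RInt_const. unfold scal; simpl; unfold mult; simpl. ring. }
    apply RInt_le. lra. apply ex_RInt_hh. apply ex_RInt_const.
    intros t Ht. unfold hh, gau.
    assert (H1 : 1 <= 1 + t ^ 2) by (pose proof (pow2_ge_0 t); lra).
    apply Rle_trans with (exp (- (x ^ 2 * (1 + t ^ 2)) / 2)).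
    + unfold Rdiv at 1. rewrite <- (Rmult_1_r (exp _)) at 2.
      apply Rmult_le_compat_l. apply Rlt_le, exp_pos.
      rewrite <- Rinv_1. apply Rinv_le_contravar; lra.
    + apply exp_le_mono. assert (0 <= x^2 * t^2) by (apply Rmult_le_pos; apply pow2_ge_0). lra.
Qed.

Lemma gg_lim : is_lim gg p_infty 0.
Proof.
  destruct (lim_shift_gauss 0 1 0 ltac:(lra)) as [Hp _].
  apply is_lim_le_le_loc with (fun _ => 0) (fun y => (y - 0) ^ 0 * exp (- ((y - 0) ^ 2) / (2 * 1))).
  - exists 0. intros y _. pose proof (gg_bounds y) as [H1 H2]. split; [exact H1|].
    unfold gau in H2. replace ((y - 0) ^ 0 * exp (- ((y - 0) ^ 2) / (2 * 1))) with (exp (- y ^ 2 / 2)).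
    exact H2. rewrite pow_O, Rmult_1_l, Rminus_0_r. f_equal. field.
  - apply is_lim_const.
  - exact Hp.
Qed.

Definition c0 : R := sqrt (2 * PI).

Lemma Phi0_lim_p : is_lim Phi0 p_infty (c0 / 2).
Proof.
  assert (Hc : c0 / 2 = sqrt (PI / 2 - 2 * 0)).
  { symmetry. apply sqrt_lem_1. pose proof PI_RGT_0; lra.
    unfold c0. pose proof (sqrt_pos (2*PI)); lra.
    unfold c0. replace (sqrt (2 * PI) / 2 * (sqrt (2 * PI) / 2)) with (sqrt (2*PI) * sqrt (2*PI) / 4) by field.
    rewrite sqrt_sqrt. field. pose proof PI_RGT_0; lra. }
  rewrite Hc.
  apply is_lim_ext_loc with (fun y => sqrt (PI / 2 - 2 * gg y)).
  - exists 0. intros y Hy.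
    pose proof (key_const y).
    replace (PI / 2 - 2 * gg y) with (Phi0 y ^ 2) by lra.
    apply sqrt_pow2. unfold Phi0. apply RInt_ge_0. lra. apply ex_RInt_gau.
    intros; unfold gau; apply Rlt_le, exp_pos.
  - apply (is_lim_comp_continuous (fun y => PI / 2 - 2 * gg y) sqrt p_infty).
    apply (is_lim_minus (fun _ => PI/2) (fun y => 2 * gg y) p_infty (PI/2) (2 * 0)).
    apply is_lim_const.
    replace (Finite (2 * 0)) with (Rbar_mult 2 0) by (simpl; f_equal; ring).
    apply is_lim_scal_l, gg_lim.
    simpl. apply is_Rbar_minus_correct || (unfold is_Rbar_minus, is_Rbar_plus; simpl; f_equal; ring).
    apply continuous_sqrt.
Qed.

Lemma Phi0_odd w : Phi0 (- w) = - Phi0 w.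
Proof.
  unfold Phi0.
  pose proof (RInt_comp_lin gau (-1) 0 0 w (ex_RInt_gau _ _)) as E.
  replace (-1 * 0 + 0) with 0 in E by ring. replace (-1 * w + 0) with (- w) in E by ring.
  rewrite <- E.
  rewrite (RInt_ext (V:=R_CompleteNormedModule)) with (g := fun y => scal (-1) (gau y)).
  2: { intros y _. f_equal. unfold gau. f_equal. field. }
  rewrite (RInt_scal (V:=R_CompleteNormedModule)) by apply ex_RInt_gau.
  unfold scal; simpl; unfold mult; simpl. ring.
Qed.

Lemma Phi0_lim_m : is_lim Phi0 m_infty (- (c0 / 2)).
Proof.
  pose proof Phi0_lim_p as H. apply is_lim_spec in H. apply is_lim_spec.
  intros eps. destruct (H eps) as [M HM]. exists (- M). intros y Hy.
  specialize (HM (- y) ltac:(lra)). rewrite Phi0_odd in HM.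
  replace (Phi0 y - - (c0 / 2)) with (- (- Phi0 y - c0 / 2)) by ring.
  rewrite Rabs_Ropp. exact HM.
Qed.

Arguments pow : simpl never.
Ltac toR := match goal with |- ?a = ?b => change (@eq R a b) end.
Ltac rs := unfold scal; simpl; unfold mult, plus, opp, minus, zero, one; simpl; toR.

Definition Eg (m V y : R) : R := exp (- ((y - m) ^ 2) / (2 * V)).

Lemma Eg_deriv m V y : 0 < V -> is_derive (fun x => Eg m V x) y (- (y - m) / V * Eg m V y).
Proof.
  intros HV. unfold Eg. auto_derive. auto.
  toR. unfold Rminus, Rdiv. rewrite pow_1. field. lra.
Qed.

Lemma Derive_Eg m V y : 0 < V -> Derive (fun x => Eg m V x) y = - (y - m) / V * Eg m V y.
Proof. intros; apply is_derive_unique, Eg_deriv; auto. Qed.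

Lemma ex_Eg m V y : 0 < V -> ex_derive (fun x => Eg m V x) y.
Proof. intros; eexists; apply Eg_deriv; auto. Qed.

Lemma Eg_pos m V y : 0 < Eg m V y.
Proof. apply exp_pos. Qed.

Definition Nmv (m V y : R) : R := Eg m V y / sqrt (2 * PI * V).
Definition Phim (m V y : R) : R := Phi0 ((y - m) / sqrt V) / c0.

Lemma c0_pos : 0 < c0.
Proof. unfold c0. apply sqrt_lt_R0. pose proof PI_RGT_0; lra. Qed.

Lemma sqrt2PIV V : 0 < V -> sqrt (2 * PI * V) = c0 * sqrt V.
Proof. intros HV. unfold c0. rewrite sqrt_mult_alt. reflexivity. pose proof PI_RGT_0; lra. Qed.

Lemma sqV_pos V : 0 < V -> 0 < sqrt (2 * PI * V).
Proof. intros; apply sqrt_lt_R0. pose proof PI_RGT_0. nra. Qed.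

Lemma Phim_deriv m V y : 0 < V -> is_derive (fun x => Phim m V x) y (Nmv m V y).
Proof.
  intros HV. unfold Phim, Nmv.
  assert (Hs : 0 < sqrt V) by (apply sqrt_lt_R0; lra).
  pose proof c0_pos.
  evar (d : R).
  assert (H1 : is_derive (fun y => (y - m) / sqrt V) y d).
  { unfold d. auto_derive. auto. reflexivity. }
  pose proof (is_derive_comp Phi0 (fun y => (y - m) / sqrt V) y _ _ (Phi0_deriv _) H1) as H2.
  pose proof (is_derive_scal_l _ _ _ (/ c0) H2) as H3. simpl in H3.
  apply (is_derive_ext (fun x => scal (Phi0 ((x - m) / sqrt V)) (/ c0))).
  { intros; rs. field. lra. }
  replace (Eg m V y / sqrt (2 * PI * V)) with (scal (scal d (gau ((y - m) / sqrt V))) (/ c0)).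
  exact H3.
  unfold d, gau, Eg. rs. rewrite sqrt2PIV by lra.
  replace (- ((y - m) / sqrt V) ^ 2 / 2) with (- (y - m) ^ 2 / (2 * V)).
  field. split; lra.
  unfold Rdiv. rewrite Rpow_mult_distr, pow_inv. rewrite pow2_sqrt by lra. field. lra.
Qed.

Lemma Derive_Phim m V y : 0 < V -> Derive (fun x => Phim m V x) y = Nmv m V y.
Proof. intros; apply is_derive_unique, Phim_deriv; auto. Qed.

Lemma ex_Phim m V y : 0 < V -> ex_derive (fun x => Phim m V x) y.
Proof. intros; eexists; apply Phim_deriv; auto. Qed.

Lemma lin_lim m a : 0 < a ->
  is_lim (fun y => (y - m) / a) p_infty p_infty /\ is_lim (fun y => (y - m) / a) m_infty m_infty.
Proof.
  intros Ha. split; apply is_lim_spec; intros M.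
  - exists (m + Rabs M * a). intros y Hy. pose proof (Rle_abs M).
    apply Rmult_lt_reg_r with a; auto. unfold Rdiv. rewrite Rmult_assoc, Rinv_l by lra. nra.
  - exists (m - Rabs M * a). intros y Hy. pose proof (Rle_abs (-M)). rewrite Rabs_Ropp in H.
    apply Rmult_lt_reg_r with a; auto. unfold Rdiv. rewrite Rmult_assoc, Rinv_l by lra. nra.
Qed.

Lemma Phim_lim m V : 0 < V -> is_lim (fun y => Phim m V y) p_infty (/2) /\ is_lim (fun y => Phim m V y) m_infty (-/2).
Proof.
  intros HV. assert (Hs : 0 < sqrt V) by (apply sqrt_lt_R0; lra).
  destruct (lin_lim m (sqrt V) Hs) as [L1 L2]. pose proof c0_pos.
  unfold Phim. split.
  - replace (Finite (/2)) with (Rbar_mult (c0 / 2) (/ c0)) by (simpl; f_equal; field; lra).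
    apply is_lim_mult. 2: apply is_lim_const. 2: simpl; auto.
    eapply is_lim_comp. apply Phi0_lim_p. exact L1. exists 0. intros; discriminate.
  - replace (Finite (-/2)) with (Rbar_mult (-(c0 / 2)) (/ c0)) by (simpl; f_equal; field; lra).
    apply is_lim_mult. 2: apply is_lim_const. 2: simpl; auto.
    eapply is_lim_comp. apply Phi0_lim_m. exact L2. exists 0. intros; discriminate.
Qed.

Lemma isRbp a b c : a + b = c -> is_Rbar_plus (Finite a) (Finite b) (Finite c).
Proof. intros H; unfold is_Rbar_plus; simpl; rewrite H; reflexivity. Qed.

Lemma lim_plus0 f g x : is_lim f x 0 -> is_lim g x 0 -> is_lim (fun y => f y + g y) x 0.
Proof.
  intros H1 H2. eapply is_lim_plus; [exact H1|exact H2|].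
  apply isRbp; ring.
Qed.

Lemma lim_scal0 f a x : is_lim f x 0 -> is_lim (fun y => a * f y) x 0.
Proof.
  intros H. replace (Finite 0) with (Rbar_mult a 0) by (simpl; f_equal; ring). apply is_lim_scal_l; auto.
Qed.

Lemma poly3_lim m V r0 r1 r2 r3 : 0 < V ->
  is_lim (fun y => (r0 + r1 * (y - m) + r2 * (y - m) ^ 2 + r3 * (y - m) ^ 3) * Eg m V y) p_infty 0 /\
  is_lim (fun y => (r0 + r1 * (y - m) + r2 * (y - m) ^ 2 + r3 * (y - m) ^ 3) * Eg m V y) m_infty 0.
Proof.
  intros HV.
  destruct (lim_shift_gauss 0 V m HV) as [A0 B0].
  destruct (lim_shift_gauss 1 V m HV) as [A1 B1].
  destruct (lim_shift_gauss 2 V m HV) as [A2 B2].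
  destruct (lim_shift_gauss 3 V m HV) as [A3 B3].
  assert (E : forall y, r0 * ((y - m) ^ 0 * exp (- (y - m) ^ 2 / (2 * V))) +
        r1 * ((y - m) ^ 1 * exp (- (y - m) ^ 2 / (2 * V))) +
        r2 * ((y - m) ^ 2 * exp (- (y - m) ^ 2 / (2 * V))) +
        r3 * ((y - m) ^ 3 * exp (- (y - m) ^ 2 / (2 * V))) =
        (r0 + r1 * (y - m) + r2 * (y - m) ^ 2 + r3 * (y - m) ^ 3) * Eg m V y).
  { intros y. unfold Eg. rewrite pow_O, pow_1. ring. }
  split; (eapply is_lim_ext; [exact E|]);
  repeat apply lim_plus0; apply lim_scal0; assumption.
Qed.

Definition Cm (q0 q2 q4 V : R) := q0 + q2 * V + 3 * q4 * V ^ 2.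

Lemma moment m V q0 q1 q2 q3 q4 : 0 < V ->
  improper_integral (fun y => (q0 + q1 * (y - m) + q2 * (y - m) ^ 2 + q3 * (y - m) ^ 3 + q4 * (y - m) ^ 4) * Nmv m V y)
  (Cm q0 q2 q4 V).
Proof.
  intros HV. pose proof (sqV_pos V HV) as Hq.
  set (sq := sqrt (2 * PI * V)).
  set (Fm := fun y => Cm q0 q2 q4 V * Phim m V y +
     (- V * (q1 + q2 * (y - m) + q3 * ((y - m) ^ 2 + 2 * V) + q4 * ((y - m) ^ 3 + 3 * V * (y - m))))
       * Eg m V y / sq).
  assert (Hsq : sq <> 0) by (unfold sq; apply Rgt_not_eq, sqV_pos, HV).
  replace (Cm q0 q2 q4 V) with (/ 2 * Cm q0 q2 q4 V - (- / 2 * Cm q0 q2 q4 V)) by field.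
  apply (imp_antideriv _ Fm).
  - intros y. unfold Fm, Nmv. fold sq. auto_derive.
    + repeat split; auto using ex_Phim, ex_Eg.
    + rewrite Derive_Phim, Derive_Eg by auto. unfold Nmv. fold sq. unfold Cm. toR. field. split; [exact Hsq| intro; lra].
  - intros y. apply cont_ed. unfold Nmv. auto_derive. repeat split; auto using ex_Eg.
  - destruct (Phim_lim m V HV) as [_ L].
    destruct (poly3_lim m V (- V * (q1 + q3 * 2 * V)) (- V * (q2 + q4 * 3 * V)) (- V * q3) (- V * q4) HV) as [_ P].
    unfold Fm.
    apply (is_lim_plus _ _ _ (Finite (Cm q0 q2 q4 V * (-/2))) (Finite 0)).
    + replace (Finite (Cm q0 q2 q4 V * (-/2))) with (Rbar_mult (Cm q0 q2 q4 V) (-/2)) by reflexivity.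
      apply is_lim_scal_l; exact L.
    + replace (Finite 0) with (Rbar_mult 0 (/ sq)) by (simpl; f_equal; ring).
      apply is_lim_mult; [| apply is_lim_const | simpl; auto].
      eapply is_lim_ext; [| exact P]. intros y; simpl. ring.
    + apply isRbp; ring.
  - destruct (Phim_lim m V HV) as [L _].
    destruct (poly3_lim m V (- V * (q1 + q3 * 2 * V)) (- V * (q2 + q4 * 3 * V)) (- V * q3) (- V * q4) HV) as [P _].
    unfold Fm.
    apply (is_lim_plus _ _ _ (Finite (Cm q0 q2 q4 V * (/2))) (Finite 0)).
    + replace (Finite (Cm q0 q2 q4 V * (/2))) with (Rbar_mult (Cm q0 q2 q4 V) (/2)) by reflexivity.
      apply is_lim_scal_l; exact L.
    + replace (Finite 0) with (Rbar_mult 0 (/ sq)) by (simpl; f_equal; ring).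
      apply is_lim_mult; [| apply is_lim_const | simpl; auto].
      eapply is_lim_ext; [| exact P]. intros y; simpl. ring.
    + apply isRbp; ring.
Qed.

Definition Pol (p0 p1 p2 p3 p4 z : R) := p0 + p1 * z + p2 * z ^ 2 + p3 * z ^ 3 + p4 * z ^ 4.

Definition convres (A B X p0 p1 p2 p3 p4 : R) : R :=
  let mu := B * X / (A + B) in let V := A * B / (A + B) in
  p0 + p1 * mu + p2 * (mu ^ 2 + V) + p3 * (mu ^ 3 + 3 * mu * V) + p4 * (mu ^ 4 + 6 * mu ^ 2 * V + 3 * V ^ 2).

Lemma conv A B x c p0 p1 p2 p3 p4 : 0 < A -> 0 < B ->
  int_R (fun y => Nmv (A / 2) A (x - y) * (Pol p0 p1 p2 p3 p4 (y - c) * Nmv (B / 2) B (y - c)))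
  = Nmv ((A + B) / 2) (A + B) (x - c) * convres A B (x - c) p0 p1 p2 p3 p4.
Proof.
  intros HA HB.
  set (mu := B * (x - c) / (A + B)). set (V := A * B / (A + B)). set (m := c + mu).
  assert (HV : 0 < V) by (unfold V; apply Rdiv_lt_0_compat; nra).
  set (Kc := Nmv ((A + B) / 2) (A + B) (x - c)).
  set (q0 := p0 + p1 * mu + p2 * mu ^ 2 + p3 * mu ^ 3 + p4 * mu ^ 4).
  set (q1 := p1 + 2 * p2 * mu + 3 * p3 * mu ^ 2 + 4 * p4 * mu ^ 3).
  set (q2 := p2 + 3 * p3 * mu + 6 * p4 * mu ^ 2).
  set (q3 := p3 + 4 * p4 * mu).
  replace (fun y => Nmv (A / 2) A (x - y) * (Pol p0 p1 p2 p3 p4 (y - c) * Nmv (B / 2) B (y - c)))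
    with (fun y => Kc * ((q0 + q1 * (y - m) + q2 * (y - m) ^ 2 + q3 * (y - m) ^ 3 + p4 * (y - m) ^ 4) * Nmv m V y)).
  - apply int_R_eq. replace (Kc * convres A B (x - c) p0 p1 p2 p3 p4) with (Kc * Cm q0 q2 p4 V).
    apply improper_scal, moment, HV.
    unfold convres, Cm. fold mu V. unfold q0, q2. ring.
  - apply functional_extensionality. intros y.
    unfold Kc, Nmv, Eg.
    assert (Hs : sqrt (2 * PI * A) * sqrt (2 * PI * B) = sqrt (2 * PI * (A + B)) * sqrt (2 * PI * V)).
    { pose proof PI_RGT_0. rewrite <- !sqrt_mult_alt by nra. f_equal. unfold V. field. lra. }
    assert (He : exp (- (x - y - A / 2) ^ 2 / (2 * A)) * exp (- (y - c - B / 2) ^ 2 / (2 * B)) =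
                 exp (- (x - c - (A + B) / 2) ^ 2 / (2 * (A + B))) * exp (- (y - m) ^ 2 / (2 * V))).
    { rewrite <- !exp_plus. f_equal. unfold m, mu, V. field. split; lra. }
    assert (Hp : Pol p0 p1 p2 p3 p4 (y - c) = q0 + q1 * (y - m) + q2 * (y - m) ^ 2 + q3 * (y - m) ^ 3 + p4 * (y - m) ^ 4).
    { unfold Pol, q0, q1, q2, q3, m. ring. }
    pose proof (sqV_pos A HA). pose proof (sqV_pos B HB). pose proof (sqV_pos V HV).
    assert (0 < sqrt (2 * PI * (A + B))) by (apply sqV_pos; lra).
    replace (exp (- (x - y - A / 2) ^ 2 / (2 * A)) / sqrt (2 * PI * A) *
      (Pol p0 p1 p2 p3 p4 (y - c) * (exp (- (y - c - B / 2) ^ 2 / (2 * B)) / sqrt (2 * PI * B))))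
    with (Pol p0 p1 p2 p3 p4 (y - c) * (exp (- (x - y - A / 2) ^ 2 / (2 * A)) * exp (- (y - c - B / 2) ^ 2 / (2 * B)))
          / (sqrt (2 * PI * A) * sqrt (2 * PI * B))) by (field; split; lra).
    rewrite He, Hs, Hp. field. repeat split; lra.
Qed.


Ltac sqfield tau :=
  let q := fresh "q" in
  let Hq := fresh "Hq" in let Hq0 := fresh "Hq0" in
  assert (Hq : sqrt tau * sqrt tau = tau) by (apply sqrt_sqrt; lra);
  assert (Hq0 : 0 < sqrt tau) by (apply sqrt_lt_R0; lra);
  try rewrite (sqrt2PIV tau) by lra;
  set (q := sqrt tau) in *; clearbody q; subst tau;
  pose proof c0_pos; toR; field; repeat split; try lra.

Lemma phi_dz tau z s : 0 < tau -> 0 < s ->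
  is_derive (fun z => phi tau z s) z (phi tau z s * (- z / (s ^ 2 * tau) + / 2)).
Proof.
  intros Ht Hs. unfold phi.
  assert (Hq : 0 < sqrt tau) by (apply sqrt_lt_R0; lra).
  assert (Hq2 : 0 < sqrt (2 * PI * tau)) by (apply sqrt_lt_R0; pose proof PI_RGT_0; nra).
  auto_derive. repeat split; try lra; nra.
  unfold Rminus, Rdiv. sqfield tau.
Qed.

Definition D1 (tau z s : R) := - z / (s ^ 2 * tau) + / 2.
Definition Sf (tau z s : R) := s * tau * (D1 tau z s ^ 2 - / (s ^ 2 * tau) - D1 tau z s).

Lemma phi_ds tau z s : 0 < tau -> 0 < s ->
  is_derive (fun u => phi tau z u) s (phi tau z s * Sf tau z s).
Proof.
  intros Ht Hs. unfold phi, Sf, D1.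
  assert (Hq : 0 < sqrt tau) by (apply sqrt_lt_R0; lra).
  assert (Hq2 : 0 < sqrt (2 * PI * tau)) by (apply sqrt_lt_R0; pose proof PI_RGT_0; nra).
  auto_derive. repeat split; try lra; nra.
  unfold Rminus, Rdiv. sqfield tau.
Qed.

Lemma phi_Nmv tau z s : 0 < tau -> 0 < s -> phi tau z s = Nmv (s ^ 2 * tau / 2) (s ^ 2 * tau) z.
Proof.
  intros Ht Hs. unfold phi, Nmv, Eg.
  assert (E1 : sqrt (2 * PI * (s ^ 2 * tau)) = s * sqrt (2 * PI * tau)).
  { replace (2 * PI * (s ^ 2 * tau)) with ((s * s) * (2 * PI * tau)) by ring.
    rewrite sqrt_mult_alt, sqrt_square by nra. reflexivity. }
  assert (E2 : - / 2 * (z / (s * sqrt tau) - s * sqrt tau / 2) ^ 2 =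
     - (z - s ^ 2 * tau / 2) ^ 2 / (2 * (s ^ 2 * tau))).
  { assert (Hq : sqrt tau * sqrt tau = tau) by (apply sqrt_sqrt; lra).
    assert (Hq0 : 0 < sqrt tau) by (apply sqrt_lt_R0; lra).
    set (q := sqrt tau) in *; clearbody q; subst tau. field. lra. }
  rewrite E1, E2.
  assert (0 < sqrt (2 * PI * tau)) by (apply sqrt_lt_R0; pose proof PI_RGT_0; nra).
  field. lra.
Qed.

Lemma Derive_phi_z tau z s : 0 < tau -> 0 < s -> Derive (fun x => phi tau x s) z = phi tau z s * D1 tau z s.
Proof. intros; apply is_derive_unique, phi_dz; auto. Qed.
Lemma ex_phi_z tau z s : 0 < tau -> 0 < s -> ex_derive (fun x => phi tau x s) z.
Proof. intros; eexists; apply phi_dz; auto. Qed.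
Lemma Derive_phi_s tau z s : 0 < tau -> 0 < s -> Derive (fun x => phi tau z x) s = phi tau z s * Sf tau z s.
Proof. intros; apply is_derive_unique, phi_ds; auto. Qed.
Lemma ex_phi_s tau z s : 0 < tau -> 0 < s -> ex_derive (fun x => phi tau z x) s.
Proof. intros; eexists; apply phi_ds; auto. Qed.

Lemma heat_pos tau f x s : 0 < tau -> heat tau f x s = int_R (fun y => phi tau (x - y) s * f y s).
Proof. intros H. unfold heat. destruct (Rle_dec tau 0); [lra | reflexivity]. Qed.

Lemma heat_0 f x s : heat 0 f x s = f x s.
Proof. unfold heat. destruct (Rle_dec 0 0); [reflexivity | lra]. Qed.

Lemma loc_pos s : 0 < s -> locally s (fun u => 0 < u).
Proof.
  intros Hs. apply (locally_interval _ s 0 p_infty); simpl; auto.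
Qed.

Lemma cont_phi_payoff tau x s K : 0 < tau -> 0 < s ->
  forall y, continuous (fun y => phi tau (x - y) s * payoff K y s) y.
Proof.
  intros Ht Hs y. unfold payoff.
  apply (continuous_ext (fun y => phi tau (x - y) s * (((exp y - K) + Rabs (exp y - K)) / 2))).
  { intros z. f_equal. unfold Rmax. destruct (Rle_dec (exp z - K) 0).
    rewrite Rabs_left1 by lra. field. rewrite Rabs_right by lra. field. }
  apply (continuous_mult (K:=R_AbsRing)).
  apply cont_ed. unfold phi. auto_derive.
  assert (0 < sqrt tau) by (apply sqrt_lt_R0; lra).
  assert (0 < sqrt (2 * PI * tau)) by (apply sqrt_lt_R0; pose proof PI_RGT_0; nra).
  repeat split; nra.
  apply (continuous_ext (fun y => ((exp y - K) + Rabs (exp y - K)) * / 2)).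
  { intros; unfold Rdiv; reflexivity. }
  apply (continuous_mult (K:=R_AbsRing)); [| apply continuous_const].
  apply (continuous_plus (K:=R_AbsRing) (V:=R_NormedModule) (fun y => exp y - K) (fun y => Rabs (exp y - K))).
  apply cont_ed; auto_derive; auto.
  apply continuous_Rabs_comp. apply cont_ed; auto_derive; auto.
Qed.

Definition BS (K tau x s : R) : R :=
  exp x * (/ 2 - Phi0 ((ln K - x - s ^ 2 * tau / 2) / (s * sqrt tau)) / c0)
  - K * (/ 2 - Phi0 ((ln K - x + s ^ 2 * tau / 2) / (s * sqrt tau)) / c0).

Lemma sqrtA s tau : 0 < s -> 0 < tau -> sqrt (s ^ 2 * tau) = s * sqrt tau.
Proof. intros. rewrite sqrt_mult_alt by nra. rewrite <- Rsqr_pow2, sqrt_Rsqr by lra. reflexivity. Qed.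

Lemma heat_payoff K tau x s : 0 < K -> 0 < tau -> 0 < s -> heat tau (payoff K) x s = BS K tau x s.
Proof.
  intros HK Ht Hs. rewrite heat_pos by lra.
  assert (HA : 0 < s ^ 2 * tau) by (apply Rmult_lt_0_compat; [apply pow_lt|]; lra).
  rewrite (int_R_antideriv_half _
    (fun y => exp x * Phim (x + s ^ 2 * tau / 2) (s ^ 2 * tau) y - K * Phim (x - s ^ 2 * tau / 2) (s ^ 2 * tau) y)
    (ln K) (exp x * / 2 - K * / 2)).
  - unfold BS, Phim. rewrite sqrtA by lra.
    replace ((ln K - (x + s ^ 2 * tau / 2)) / (s * sqrt tau)) with ((ln K - x - s ^ 2 * tau / 2) / (s * sqrt tau)) by (f_equal; ring).
    replace ((ln K - (x - s ^ 2 * tau / 2)) / (s * sqrt tau)) with ((ln K - x + s ^ 2 * tau / 2) / (s * sqrt tau)) by (f_equal; ring).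
    field. pose proof c0_pos; lra.
  - intros y Hy. auto_derive.
    + repeat split; apply ex_Phim; lra.
    + rewrite !Derive_Phim by lra. rewrite phi_Nmv by lra. unfold payoff. rewrite Rmax_left.
      2: { assert (exp (ln K) <= exp y) by (apply exp_le_mono; lra). rewrite exp_ln in H by lra. lra. }
      unfold Nmv, Eg. set (A := s ^ 2 * tau) in *.
      assert (E1 : exp (- (x - y - A / 2) ^ 2 / (2 * A)) * exp y = exp x * exp (- (y - (x + A / 2)) ^ 2 / (2 * A))).
      { rewrite <- !exp_plus. f_equal. field. lra. }
      assert (E2 : exp (- (x - y - A / 2) ^ 2 / (2 * A)) = exp (- (y - (x - A / 2)) ^ 2 / (2 * A))).
      { f_equal. field. lra. }
      assert (0 < sqrt (2 * PI * A)) by (apply sqV_pos; lra).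
      toR. replace (exp (- (x - y - A / 2) ^ 2 / (2 * A)) / sqrt (2 * PI * A) * (exp y - K)) with
        ((exp (- (x - y - A / 2) ^ 2 / (2 * A)) * exp y - K * exp (- (x - y - A / 2) ^ 2 / (2 * A))) / sqrt (2 * PI * A))
        by (field; lra).
      rewrite E1, E2. field. lra.
  - apply cont_phi_payoff; lra.
  - intros y Hy. unfold payoff. rewrite Rmax_right. toR. ring.
    assert (exp y <= exp (ln K)) by (apply exp_le_mono; lra). rewrite exp_ln in H by lra. lra.
  - destruct (Phim_lim (x + s ^ 2 * tau / 2) (s ^ 2 * tau) HA) as [L1 _].
    destruct (Phim_lim (x - s ^ 2 * tau / 2) (s ^ 2 * tau) HA) as [L2 _].
    apply (is_lim_minus _ _ _ (exp x * / 2) (K * / 2)).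
    + apply (is_lim_scal_l _ (exp x) _ (/2)); exact L1.
    + apply (is_lim_scal_l _ K _ (/2)); exact L2.
    + unfold is_Rbar_minus, is_Rbar_plus; simpl. try (f_equal; f_equal; ring).
Qed.

Lemma Derive_Phi0 w : Derive (fun x => Phi0 x) w = gau w.
Proof. apply is_derive_unique, Phi0_deriv. Qed.

Lemma ex_Phi0 w : ex_derive (fun x => Phi0 x) w.
Proof. eexists; apply Phi0_deriv. Qed.

Lemma gau_rel K tau x s : 0 < K -> 0 < tau -> 0 < s ->
  gau ((ln K - x - s ^ 2 * tau / 2) / (s * sqrt tau)) =
  K * gau ((ln K - x + s ^ 2 * tau / 2) / (s * sqrt tau)) / exp x.
Proof.
  intros HK Ht Hs.
  assert (H : gau ((ln K - x - s ^ 2 * tau / 2) / (s * sqrt tau)) * exp x =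
              K * gau ((ln K - x + s ^ 2 * tau / 2) / (s * sqrt tau))).
  { unfold gau. rewrite <- (exp_ln K) at 2 by lra. rewrite <- !exp_plus. f_equal.
    assert (Hq : sqrt tau * sqrt tau = tau) by (apply sqrt_sqrt; lra).
    assert (Hq0 : 0 < sqrt tau) by (apply sqrt_lt_R0; lra).
    set (q := sqrt tau) in *; clearbody q; subst tau. field. lra. }
  rewrite <- H. field. pose proof (exp_pos x). lra.
Qed.

Lemma phi_am K tau x s : 0 < K -> 0 < tau -> 0 < s ->
  phi tau (x - ln K) s = gau ((ln K - x + s ^ 2 * tau / 2) / (s * sqrt tau)) / (c0 * s * sqrt tau).
Proof.
  intros HK Ht Hs. unfold phi, gau. rewrite sqrt2PIV by lra.
  assert (Hq : sqrt tau * sqrt tau = tau) by (apply sqrt_sqrt; lra).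
  assert (Hq0 : 0 < sqrt tau) by (apply sqrt_lt_R0; lra).
  pose proof c0_pos.
  replace (- / 2 * ((x - ln K) / (s * sqrt tau) - s * sqrt tau / 2) ^ 2)
    with (- ((ln K - x + s ^ 2 * tau / 2) / (s * sqrt tau)) ^ 2 / 2).
  field. lra.
  set (q := sqrt tau) in *; clearbody q; subst tau. field. lra.
Qed.

Lemma Ds_heat1 K tau x s : 0 < K -> 0 < tau -> 0 < s ->
  Ds (heat tau (payoff K)) x s = K * s * tau * phi tau (x - ln K) s.
Proof.
  intros HK Ht Hs. unfold Ds. apply deriv1_is.
  apply is_derive_ext_loc with (fun u => BS K tau x u).
  { apply (filter_imp (fun u => 0 < u)); [| apply loc_pos; lra].
    intros u Hu. symmetry. apply heat_payoff; lra. }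
  assert (Hq0 : 0 < sqrt tau) by (apply sqrt_lt_R0; lra).
  unfold BS. auto_derive.
  { repeat split; try apply ex_Phi0; nra. }
  rewrite !Derive_Phi0.
  pose proof (gau_rel K tau x s HK Ht Hs) as G1. pose proof (phi_am K tau x s HK Ht Hs) as G2.
  unfold Rminus, Rdiv in *. rewrite G1, G2.
  pose proof (exp_pos x). pose proof c0_pos.
  assert (Hq : sqrt tau * sqrt tau = tau) by (apply sqrt_sqrt; lra).
  set (q := sqrt tau) in *; clearbody q; subst tau. toR. field. repeat split; lra.
Qed.

Lemma heat_conv a b L p0 p1 p2 p3 p4 (f : R -> R -> R) x s : 0 < a -> 0 < b -> 0 < s ->
  (forall y, f y s = phi b (y - L) s * Pol p0 p1 p2 p3 p4 (y - L)) ->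
  heat a f x s = phi (a + b) (x - L) s * convres (s ^ 2 * a) (s ^ 2 * b) (x - L) p0 p1 p2 p3 p4.
Proof.
  intros Ha Hb Hs Hf. rewrite heat_pos by lra.
  assert (HA : 0 < s ^ 2 * a) by (apply Rmult_lt_0_compat; [apply pow_lt|]; lra).
  assert (HB : 0 < s ^ 2 * b) by (apply Rmult_lt_0_compat; [apply pow_lt|]; lra).
  replace (fun y => phi a (x - y) s * f y s) with
    (fun y => Nmv (s ^ 2 * a / 2) (s ^ 2 * a) (x - y) * (Pol p0 p1 p2 p3 p4 (y - L) * Nmv (s ^ 2 * b / 2) (s ^ 2 * b) (y - L))).
  2: { apply functional_extensionality. intros y. rewrite Hf, !phi_Nmv by lra. ring. }
  rewrite conv by auto. rewrite phi_Nmv by lra.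
  replace (s ^ 2 * a + s ^ 2 * b) with (s ^ 2 * (a + b)) by ring. reflexivity.
Qed.

Section St1.
Variables (K rho k0 theta : R).

Definition p0s (tau s : R) := rho * s ^ 3 * K * tau / 2 + k0 * (theta - s) * K * s * tau.
Definition p1s (tau s : R) := - rho * s * K.

Lemma L1_stage1 tau y s : 0 < K -> 0 < tau -> 0 < s ->
  L1 rho k0 theta (heat tau (payoff K)) y s = phi tau (y - ln K) s * Pol (p0s tau s) (p1s tau s) 0 0 0 (y - ln K).
Proof.
  intros HK Ht Hs. unfold L1, Defs.Dx.
  rewrite (functional_extensionality (fun y0 => Ds (heat tau (payoff K)) y0 s)
     (fun y0 => K * s * tau * phi tau (y0 - ln K) s)).
  2: { intros y0. apply Ds_heat1; auto. }
  rewrite Ds_heat1 by auto.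
  rewrite (deriv1_is _ _ (K * s * tau * (phi tau (y - ln K) s * D1 tau (y - ln K) s))).
  - unfold Pol, p0s, p1s, D1. field. lra.
  - auto_derive. apply ex_phi_z; auto. rewrite Derive_phi_z by auto. toR. unfold Rminus. ring.
Qed.

Lemma L2_stage1 tau y s : 0 < K -> 0 < tau -> 0 < s ->
  L2 (heat tau (payoff K)) y s = phi tau (y - ln K) s * Pol (- s ^ 4 * tau ^ 2 * K / 8) 0 (K / 2) 0 0 (y - ln K).
Proof.
  intros HK Ht Hs. unfold L2, Ds at 1.
  rewrite (deriv1_is _ _ (K * tau * phi tau (y - ln K) s + K * s * tau * (phi tau (y - ln K) s * Sf tau (y - ln K) s))).
  - unfold Pol, Sf, D1. field. lra.
  - apply is_derive_ext_loc with (fun u => K * u * tau * phi tau (y - ln K) u).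
    { apply (filter_imp (fun u => 0 < u)); [| apply loc_pos; lra].
      intros u Hu. symmetry. apply Ds_heat1; lra. }
    auto_derive. apply ex_phi_s; auto. rewrite Derive_phi_s by auto. toR. unfold Rminus. ring.
Qed.

End St1.

Lemma Nprime_phi K t x s : 0 < t -> 0 < s ->
  Nprime (d_minus K t x s) = s * sqrt t * phi t (x - ln K) s.
Proof.
  intros Ht Hs. unfold Nprime, d_minus, phi.
  assert (E : sqrt (2 * PI * t) = sqrt (2 * PI) * sqrt t) by (rewrite sqrt_mult_alt; [reflexivity| pose proof PI_RGT_0; lra]).
  rewrite E.
  assert (0 < sqrt t) by (apply sqrt_lt_R0; lra).
  replace (- ((x - ln K) / (s * sqrt t) - s * sqrt t / 2) ^ 2 / 2) with
     (- / 2 * ((x - ln K) / (s * sqrt t) - s * sqrt t / 2) ^ 2) by (field; split; lra).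
  assert (0 < sqrt (2 * PI)) by (apply sqrt_lt_R0; pose proof PI_RGT_0; lra).
  field. repeat split; lra.
Qed.

Lemma int_ab_open f g a b v : a <= b -> (forall x, a < x < b -> f x = g x) -> is_RInt g a b v -> int_ab f a b = v.
Proof.
  intros Hab H Hg. apply int_ab_eq. apply is_RInt_ext with g; auto.
  intros x Hx. rewrite Rmin_left, Rmax_right in Hx by lra. symmetry; apply H; auto.
Qed.

Lemma F1_val K t rho k0 theta x s : 0 < K -> 0 < t -> 0 < s ->
  F1 rho k0 theta t K x s = K * t / 2 * (k0 * (theta - s) * sqrt t - rho * s * d_minus K t x s)
        * Nprime (d_minus K t x s).
Proof.
  intros HK Ht Hs. unfold F1.
  set (X := x - ln K).
  set (al := phi t X s * (rho * s ^ 3 * K / 2 + k0 * (theta - s) * K * s - rho * s * K * X / t)).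
  rewrite (int_ab_open _ (fun tau => al * tau) 0 t (al * t ^ 2 / 2)).
  - rewrite Nprime_phi by lra. unfold al, d_minus. fold X.
    assert (Hq : sqrt t * sqrt t = t) by (apply sqrt_sqrt; lra).
    assert (Hq0 : 0 < sqrt t) by (apply sqrt_lt_R0; lra).
    clearbody X. set (q := sqrt t) in *; clearbody q. subst t. field. lra.
  - lra.
  - intros tau Htau.
    rewrite (heat_conv (t - tau) tau (ln K) (p0s K rho k0 theta tau s) (p1s K rho tau s) 0 0 0) by
      (try lra; intros y; apply L1_stage1; lra).
    replace (t - tau + tau) with t by ring. fold X. unfold al, convres, p0s, p1s. toR. field.
    split; [lra|]. replace (s ^ 2 * (t - tau) + s ^ 2 * tau) with (s ^ 2 * t) by ring.
    apply Rgt_not_eq, Rmult_lt_0_compat; [apply pow_lt|]; lra.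
  - replace (al * t ^ 2 / 2) with (minus (al * t ^ 2 / 2) (al * 0 ^ 2 / 2)).
    apply (is_RInt_derive (fun tau => al * tau ^ 2 / 2)).
    + intros; auto_derive; auto. field.
    + intros; apply cont_ed; auto_derive; auto.
    + unfold minus, plus, opp; simpl. field.
Qed.

Definition R1f (rho k0 theta K s t t1 t2 X : R) : R :=
  (- (s * t2 * X * rho * K) / (t1) + s * t2 * k0 * theta * K - s ^ 2 * t2 * k0 * K + (s ^ 3 * t2 * rho * K) / (2)).

Definition dR1f (rho k0 theta K s t t1 t2 X : R) : R :=
  (- (t2 * X * rho * K) / (t1) + t2 * k0 * theta * K - 2 * s * t2 * k0 * K + (3 * s ^ 2 * t2 * rho * K) / (2)).

Definition p0f (rho k0 theta K s t t1 t2 X : R) : R :=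
  (- s * t2 * k0 ^ 2 * theta * K + s ^ 2 * t2 * k0 ^ 2 * K + s ^ 2 * t2 * rho * k0 * theta * K - (s ^ 2 * t1 * t2 * k0 ^ 2 * theta ^ 2 * K) / (4) - (3 * s ^ 3 * t2 * rho * k0 * K) / (2) + (s ^ 3 * t1 * t2 * k0 ^ 2 * theta * K) / (2) + (3 * s ^ 4 * t2 * rho ^ 2 * K) / (4) - (s ^ 4 * t1 * t2 * k0 ^ 2 * K) / (4) - (s ^ 4 * t1 * t2 * rho * k0 * theta * K) / (4) + (s ^ 5 * t1 * t2 * rho * k0 * K) / (4) - (s ^ 6 * t1 * t2 * rho ^ 2 * K) / (16)).

Definition p1f (rho k0 theta K s t t1 t2 X : R) : R :=
  ((2 * t2 * rho * k0 * theta * K) / (t1) - (s * t2 * rho * k0 * K) / (t1) + (s ^ 2 * t2 * rho * k0 * theta * K) / (2) - (s ^ 3 * t2 * rho * k0 * K) / (2) + (s ^ 4 * t2 * rho ^ 2 * K) / (4)).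

Definition p2f (rho k0 theta K s t t1 t2 X : R) : R :=
  ((t2 * k0 ^ 2 * theta ^ 2 * K) / (s ^ 2 * t1) - (2 * t2 * k0 ^ 2 * theta * K) / (s * t1) - (3 * t2 * rho ^ 2 * K) / (t1 ^ 2) + (t2 * k0 ^ 2 * K) / (t1) + (t2 * rho * k0 * theta * K) / (t1) - (s * t2 * rho * k0 * K) / (t1)).

Definition p3f (rho k0 theta K s t t1 t2 X : R) : R :=
  (- (2 * t2 * rho * k0 * theta * K) / (s ^ 2 * t1 ^ 2) + (2 * t2 * rho * k0 * K) / (s * t1 ^ 2) - (t2 * rho ^ 2 * K) / (t1 ^ 2)).

Definition p4f (rho k0 theta K s t t1 t2 X : R) : R :=
  ((t2 * rho ^ 2 * K) / (s ^ 2 * t1 ^ 3)).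

Definition q0f (rho k0 theta K s t t1 t2 X : R) : R :=
  (- (s ^ 4 * t1 ^ 2 * K) / (8)).

Definition q2f (rho k0 theta K s t t1 t2 X : R) : R :=
  ((K) / (2)).

Definition J3f (rho k0 theta K s t t1 t2 X : R) : R :=
  ((t1 * t2 * X ^ 4 * rho ^ 2 * K) / (s ^ 2 * t ^ 4) - (2 * t1 * t2 * X ^ 3 * rho * k0 * theta * K) / (s ^ 2 * t ^ 3) + (t1 * t2 * X ^ 2 * k0 ^ 2 * theta ^ 2 * K) / (s ^ 2 * t ^ 2) + (2 * t1 * t2 * X ^ 3 * rho * k0 * K) / (s * t ^ 3) - (2 * t1 * t2 * X ^ 2 * k0 ^ 2 * theta * K) / (s * t ^ 2) - (6 * t1 * t2 * X ^ 2 * rho ^ 2 * K) / (t ^ 3) - (t1 * t2 * X ^ 3 * rho ^ 2 * K) / (t ^ 3) + (3 * t2 * X ^ 2 * rho ^ 2 * K) / (t ^ 2) + (6 * t1 * t2 * X * rho * k0 * theta * K) / (t ^ 2) + (t1 * t2 * X ^ 2 * k0 ^ 2 * K) / (t ^ 2) + (t1 * t2 * X ^ 2 * rho * k0 * theta * K) / (t ^ 2) - (4 * t2 * X * rho * k0 * theta * K) / (t) - (t1 * t2 * k0 ^ 2 * theta ^ 2 * K) / (t) + t2 * k0 ^ 2 * theta ^ 2 * K - (6 * s * t1 * t2 * X * rho * k0 * K) / (t ^ 2) - (s * t1 * t2 * X ^ 2 * rho * k0 * K) / (t ^ 2) + (5 * s * t2 * X * rho * k0 * K) / (t) + (2 *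 s * t1 * t2 * k0 ^ 2 * theta * K) / (t) - 3 * s * t2 * k0 ^ 2 * theta * K + (3 * s ^ 2 * t1 * t2 * rho ^ 2 * K) / (t ^ 2) + (3 * s ^ 2 * t1 * t2 * X * rho ^ 2 * K) / (t ^ 2) - (3 * s ^ 2 * t2 * rho ^ 2 * K) / (t) - (3 * s ^ 2 * t2 * X * rho ^ 2 * K) / (t) - (s ^ 2 * t1 * t2 * k0 ^ 2 * K) / (t) - (s ^ 2 * t1 * t2 * rho * k0 * theta * K) / (t) + (s ^ 2 * t1 * t2 * X * rho * k0 * theta * K) / (2 * t) + 2 * s ^ 2 * t2 * k0 ^ 2 * K + 2 * s ^ 2 * t2 * rho * k0 * theta * K - (s ^ 2 * t1 * t2 * k0 ^ 2 * theta ^ 2 * K) / (4) + (s ^ 3 * t1 * t2 * rho * k0 * K) / (t) - (s ^ 3 * t1 * t2 * X * rho * k0 * K) / (2 * t) - (5 * s ^ 3 * t2 * rho * k0 * K) / (2) + (s ^ 3 * t1 * t2 * k0 ^ 2 * theta * K) / (2) + (s ^ 4 * t1 * t2 * X * rho ^ 2 * K) / (4 * t) + (3 * s ^ 4 * t2 * rho ^ 2 * K) / (4) - (s ^ 4 * t1 * t2 * k0 ^ 2 * K) / (4) - (s ^ 4 * t1 * t2 * rho * k0 * theta * K) / (4) + (s ^ 5 * t1 * t2 * rho * k0 * K) / (4) - (s ^ 6 * t1 * t2 * rho ^ 2 * K) / (16)).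

Definition H3f (rho k0 theta K s t t1 t2 X : R) : R :=
  ((t1 * t2 ^ 2 * X ^ 4 * rho ^ 2 * K) / (2 * s ^ 2 * t ^ 4) - (t1 * t2 ^ 2 * X ^ 3 * rho * k0 * theta * K) / (s ^ 2 * t ^ 3) + (t1 * t2 ^ 2 * X ^ 2 * k0 ^ 2 * theta ^ 2 * K) / (2 * s ^ 2 * t ^ 2) + (t1 * t2 ^ 2 * X ^ 3 * rho * k0 * K) / (s * t ^ 3) - (t1 * t2 ^ 2 * X ^ 2 * k0 ^ 2 * theta * K) / (s * t ^ 2) - (3 * t1 * t2 ^ 2 * X ^ 2 * rho ^ 2 * K) / (t ^ 3) - (t1 * t2 ^ 2 * X ^ 3 * rho ^ 2 * K) / (2 * t ^ 3) + (3 * t2 ^ 2 * X ^ 2 * rho ^ 2 * K) / (2 * t ^ 2) + (3 * t1 * t2 ^ 2 * X * rho * k0 * theta * K) / (t ^ 2) + (t1 * t2 ^ 2 * X ^ 2 * k0 ^ 2 * K) / (2 * t ^ 2) + (t1 * t2 ^ 2 * X ^ 2 * rho * k0 * theta * K) / (2 * t ^ 2) - (2 * t2 ^ 2 * X * rho * k0 * theta * K) / (t) - (t1 * t2 ^ 2 * k0 ^ 2 * theta ^ 2 * K) / (2 * t) + (t2 ^ 2 * k0 ^ 2 * theta ^ 2 * K) / (2) - (3 * s * t1 * t2 ^ 2 * X * rho * k0 * K) / (t ^ 2) - (s * t1 * t2 ^ 2 * X ^ 2 * rho * k0 * K) / (2 * t ^ 2) + (5 * s * t2 ^ 2 * X *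 rho * k0 * K) / (2 * t) + (s * t1 * t2 ^ 2 * k0 ^ 2 * theta * K) / (t) - (3 * s * t2 ^ 2 * k0 ^ 2 * theta * K) / (2) + (3 * s ^ 2 * t1 * t2 ^ 2 * rho ^ 2 * K) / (2 * t ^ 2) + (3 * s ^ 2 * t1 * t2 ^ 2 * X * rho ^ 2 * K) / (2 * t ^ 2) - (3 * s ^ 2 * t2 ^ 2 * rho ^ 2 * K) / (2 * t) - (3 * s ^ 2 * t2 ^ 2 * X * rho ^ 2 * K) / (2 * t) - (s ^ 2 * t1 * t2 ^ 2 * k0 ^ 2 * K) / (2 * t) - (s ^ 2 * t1 * t2 ^ 2 * rho * k0 * theta * K) / (2 * t) + (s ^ 2 * t1 * t2 ^ 2 * X * rho * k0 * theta * K) / (4 * t) + s ^ 2 * t2 ^ 2 * k0 ^ 2 * K + s ^ 2 * t2 ^ 2 * rho * k0 * theta * K - (s ^ 2 * t1 * t2 ^ 2 * k0 ^ 2 * theta ^ 2 * K) / (8) + (s ^ 3 * t1 * t2 ^ 2 * rho * k0 * K) / (2 * t) - (s ^ 3 * t1 * t2 ^ 2 * X * rho * k0 * K) / (4 * t) - (5 * s ^ 3 * t2 ^ 2 * rho * k0 * K) / (4) + (s ^ 3 * t1 * t2 ^ 2 * k0 ^ 2 * theta * K) / (4) + (s ^ 4 * t1 * t2 ^ 2 * X * rho ^ 2 * K) / (8 * t) + (3 * s ^ 4 * t2 ^ 2 * rho ^ 2 * K) / (8) - (s ^ 4 * t1 * t2 ^ 2 * k0 ^ 2 * K) / (8) -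 (s ^ 4 * t1 * t2 ^ 2 * rho * k0 * theta * K) / (8) + (s ^ 5 * t1 * t2 ^ 2 * rho * k0 * K) / (8) - (s ^ 6 * t1 * t2 ^ 2 * rho ^ 2 * K) / (32)).

Definition I3f (rho k0 theta K s t t1 t2 X : R) : R :=
  ((t1 ^ 3 * X ^ 4 * rho ^ 2 * K) / (2 * s ^ 2 * t ^ 4) - (t1 ^ 3 * X ^ 3 * rho * k0 * theta * K) / (s ^ 2 * t ^ 3) + (t1 ^ 3 * X ^ 2 * k0 ^ 2 * theta ^ 2 * K) / (2 * s ^ 2 * t ^ 2) + (t1 ^ 3 * X ^ 3 * rho * k0 * K) / (s * t ^ 3) - (t1 ^ 3 * X ^ 2 * k0 ^ 2 * theta * K) / (s * t ^ 2) - (3 * t1 ^ 3 * X ^ 2 * rho ^ 2 * K) / (t ^ 3) - (t1 ^ 3 * X ^ 3 * rho ^ 2 * K) / (2 * t ^ 3) + (3 * t1 ^ 2 * X ^ 2 * rho ^ 2 * K) / (2 * t ^ 2) + (3 * t1 ^ 3 * X * rho * k0 * theta * K) / (t ^ 2) + (t1 ^ 3 * X ^ 2 * k0 ^ 2 * K) / (2 * t ^ 2) + (t1 ^ 3 * X ^ 2 * rho * k0 * theta * K) / (2 * t ^ 2) - (2 * t1 ^ 2 * X * rho * k0 * theta * K) / (t) - (t1 ^ 3 * k0 ^ 2 * theta ^ 2 * K) / (2 * t) + (t1 ^ 2 * k0 ^ 2 * theta ^ 2 * K) / (2) - (3 * s * t1 ^ 3 * X * rho * k0 * K) / (t ^ 2)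 - (s * t1 ^ 3 * X ^ 2 * rho * k0 * K) / (2 * t ^ 2) + (5 * s * t1 ^ 2 * X * rho * k0 * K) / (2 * t) + (s * t1 ^ 3 * k0 ^ 2 * theta * K) / (t) - (3 * s * t1 ^ 2 * k0 ^ 2 * theta * K) / (2) + (3 * s ^ 2 * t1 ^ 3 * rho ^ 2 * K) / (2 * t ^ 2) + (3 * s ^ 2 * t1 ^ 3 * X * rho ^ 2 * K) / (2 * t ^ 2) - (3 * s ^ 2 * t1 ^ 2 * rho ^ 2 * K) / (2 * t) - (3 * s ^ 2 * t1 ^ 2 * X * rho ^ 2 * K) / (2 * t) - (s ^ 2 * t1 ^ 3 * k0 ^ 2 * K) / (2 * t) - (s ^ 2 * t1 ^ 3 * rho * k0 * theta * K) / (2 * t) + (s ^ 2 * t1 ^ 3 * X * rho * k0 * theta * K) / (4 * t) + s ^ 2 * t1 ^ 2 * k0 ^ 2 * K + s ^ 2 * t1 ^ 2 * rho * k0 * theta * K - (s ^ 2 * t1 ^ 3 * k0 ^ 2 * theta ^ 2 * K) / (8) + (s ^ 3 * t1 ^ 3 * rho * k0 * K) / (2 * t) - (s ^ 3 * t1 ^ 3 * X * rho * k0 * K) / (4 * t) - (5 * s ^ 3 * t1 ^ 2 * rho * k0 * K) / (4) + (s ^ 3 * t1 ^ 3 * k0 ^ 2 * theta * K) / (4) + (s ^ 4 * t1 ^ 3 * X * rho ^ 2 * K) / (8 * t) + (3 * s ^ 4 * t1 ^ 2 * rho ^ 2 * K) / (8) - (s ^ 4 * t1 ^ 3 * k0 ^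 2 * K) / (8) - (s ^ 4 * t1 ^ 3 * rho * k0 * theta * K) / (8) + (s ^ 5 * t1 ^ 3 * rho * k0 * K) / (8) - (s ^ 6 * t1 ^ 3 * rho ^ 2 * K) / (32)).

Definition G3f (rho k0 theta K s t t1 t2 X : R) : R :=
  ((t1 ^ 4 * X ^ 4 * rho ^ 2 * K) / (8 * s ^ 2 * t ^ 4) - (t1 ^ 4 * X ^ 3 * rho * k0 * theta * K) / (4 * s ^ 2 * t ^ 3) + (t1 ^ 4 * X ^ 2 * k0 ^ 2 * theta ^ 2 * K) / (8 * s ^ 2 * t ^ 2) + (t1 ^ 4 * X ^ 3 * rho * k0 * K) / (4 * s * t ^ 3) - (t1 ^ 4 * X ^ 2 * k0 ^ 2 * theta * K) / (4 * s * t ^ 2) - (3 * t1 ^ 4 * X ^ 2 * rho ^ 2 * K) / (4 * t ^ 3) - (t1 ^ 4 * X ^ 3 * rho ^ 2 * K) / (8 * t ^ 3) + (t1 ^ 3 * X ^ 2 * rho ^ 2 * K) / (2 * t ^ 2) + (3 * t1 ^ 4 * X * rho * k0 * theta * K) / (4 * t ^ 2) + (t1 ^ 4 * X ^ 2 * k0 ^ 2 * K) / (8 * t ^ 2) + (t1 ^ 4 * X ^ 2 * rho * k0 * theta * K) / (8 * t ^ 2) - (2 * t1 ^ 3 * X * rho * k0 * theta * K) / (3 * t) - (t1 ^ 4 * k0 ^ 2 * theta ^ 2 * K) / (8 * t) + (t1 ^ 3 * k0 ^ 2 * theta ^ 2 * K) / (6) - (3 * s * t1 ^ 4 * X * rho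 * k0 * K) / (4 * t ^ 2) - (s * t1 ^ 4 * X ^ 2 * rho * k0 * K) / (8 * t ^ 2) + (5 * s * t1 ^ 3 * X * rho * k0 * K) / (6 * t) + (s * t1 ^ 4 * k0 ^ 2 * theta * K) / (4 * t) - (s * t1 ^ 3 * k0 ^ 2 * theta * K) / (2) + (3 * s ^ 2 * t1 ^ 4 * rho ^ 2 * K) / (8 * t ^ 2) + (3 * s ^ 2 * t1 ^ 4 * X * rho ^ 2 * K) / (8 * t ^ 2) - (s ^ 2 * t1 ^ 3 * rho ^ 2 * K) / (2 * t) - (s ^ 2 * t1 ^ 3 * X * rho ^ 2 * K) / (2 * t) - (s ^ 2 * t1 ^ 4 * k0 ^ 2 * K) / (8 * t) - (s ^ 2 * t1 ^ 4 * rho * k0 * theta * K) / (8 * t) + (s ^ 2 * t1 ^ 4 * X * rho * k0 * theta * K) / (16 * t) + (s ^ 2 * t1 ^ 3 * k0 ^ 2 * K) / (3) + (s ^ 2 * t1 ^ 3 * rho * k0 * theta * K) / (3) - (s ^ 2 * t1 ^ 4 * k0 ^ 2 * theta ^ 2 * K) / (32) + (s ^ 3 * t1 ^ 4 * rho * k0 * K) / (8 * t) - (s ^ 3 * t1 ^ 4 * X * rho * k0 * K) / (16 * t) - (5 * s ^ 3 * t1 ^ 3 * rho * k0 * K) / (12) + (s ^ 3 * t1 ^ 4 * k0 ^ 2 * theta * K) / (16) + (s ^ 4 * t1 ^ 4 * X * rho ^ 2 * K) / (32 * t) + (s ^ 4 * t1 ^ 3 * rho ^ 2 * K) / (8) -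 (s ^ 4 * t1 ^ 4 * k0 ^ 2 * K) / (32) - (s ^ 4 * t1 ^ 4 * rho * k0 * theta * K) / (32) + (s ^ 5 * t1 ^ 4 * rho * k0 * K) / (32) - (s ^ 6 * t1 ^ 4 * rho ^ 2 * K) / (128)).

Definition J2f (rho k0 theta K s t t1 t2 X : R) : R :=
  ((t1 ^ 2 * X ^ 2 * K) / (2 * t ^ 2) - (s ^ 2 * t1 ^ 2 * K) / (2 * t) + (s ^ 2 * t1 * K) / (2) - (s ^ 4 * t1 ^ 2 * K) / (8)).

Definition G2f (rho k0 theta K s t t1 t2 X : R) : R :=
  ((t1 ^ 3 * X ^ 2 * K) / (6 * t ^ 2) - (s ^ 2 * t1 ^ 3 * K) / (6 * t) + (s ^ 2 * t1 ^ 2 * K) / (4) - (s ^ 4 * t1 ^ 3 * K) / (24)).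

Definition Ff (rho k0 theta K s t t1 t2 X : R) : R :=
  ((X ^ 4 * rho ^ 2 * K) / (8 * s ^ 2) - (t * X ^ 3 * rho * k0 * theta * K) / (4 * s ^ 2) + (t ^ 2 * X ^ 2 * k0 ^ 2 * theta ^ 2 * K) / (8 * s ^ 2) + (t * X ^ 3 * rho * k0 * K) / (4 * s) - (t ^ 2 * X ^ 2 * k0 ^ 2 * theta * K) / (4 * s) + (t * X ^ 2 * K) / (6) - (t * X ^ 2 * rho ^ 2 * K) / (4) - (t * X ^ 3 * rho ^ 2 * K) / (8) + (t ^ 2 * X * rho * k0 * theta * K) / (12) + (t ^ 2 * X ^ 2 * k0 ^ 2 * K) / (8) + (t ^ 2 * X ^ 2 * rho * k0 * theta * K) / (8) + (t ^ 3 * k0 ^ 2 * theta ^ 2 * K) / (24) + (s * t ^ 2 * X * rho * k0 * K) / (12) - (s * t ^ 2 * X ^ 2 * rho * k0 * K) / (8) - (s * t ^ 3 * k0 ^ 2 * theta * K) / (4) + (s ^ 2 * t ^ 2 * K) / (12) - (s ^ 2 * t ^ 2 * rho ^ 2 * K) / (8) - (s ^ 2 * t ^ 2 * X * rho ^ 2 * K) / (8) + (5 * s ^ 2 * t ^ 3 * k0 ^ 2 * K) / (24) + (5 * s ^ 2 * t ^ 3 * rho * k0 * theta * K) / (24) + (s ^ 2 * t ^ 3 * X * rho * k0 * theta * K) / (16) - (s ^ 2 * t ^ 4 * k0 ^ 2 * theta ^ 2 * K) / (32) - (7 * s ^ 3 * t ^ 3 * rho * k0 * K) / (24) - (s ^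 3 * t ^ 3 * X * rho * k0 * K) / (16) + (s ^ 3 * t ^ 4 * k0 ^ 2 * theta * K) / (16) - (s ^ 4 * t ^ 3 * K) / (24) + (s ^ 4 * t ^ 3 * rho ^ 2 * K) / (8) + (s ^ 4 * t ^ 3 * X * rho ^ 2 * K) / (32) - (s ^ 4 * t ^ 4 * k0 ^ 2 * K) / (32) - (s ^ 4 * t ^ 4 * rho * k0 * theta * K) / (32) + (s ^ 5 * t ^ 4 * rho * k0 * K) / (32) - (s ^ 6 * t ^ 4 * rho ^ 2 * K) / (128)).

Lemma stage2 K rho k0 theta t t1 t2 y u : 0 < K -> 0 < t2 -> t2 < t1 -> 0 < u ->
  heat (t1 - t2) (L1 rho k0 theta (heat t2 (payoff K))) y u =
  phi t1 (y - ln K) u * R1f rho k0 theta K u t t1 t2 (y - ln K).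
Proof.
  intros HK H2 H12 Hu.
  rewrite (heat_conv (t1 - t2) t2 (ln K) (p0s K rho k0 theta t2 u) (p1s K rho t2 u) 0 0 0) by
      (try lra; intros y0; apply L1_stage1; lra).
  replace (t1 - t2 + t2) with t1 by ring. unfold convres, p0s, p1s, R1f. toR. field.
  split; [lra|]. replace (u ^ 2 * (t1 - t2) + u ^ 2 * t2) with (u ^ 2 * t1) by ring.
  apply Rgt_not_eq, Rmult_lt_0_compat; [apply pow_lt|]; lra.
Qed.

Lemma stage3 K rho k0 theta t t1 t2 y s : 0 < K -> 0 < t2 -> t2 < t1 -> 0 < s ->
  L1 rho k0 theta (heat (t1 - t2) (L1 rho k0 theta (heat t2 (payoff K)))) y s =
  phi t1 (y - ln K) s * Pol (p0f rho k0 theta K s t t1 t2 (y - ln K)) (p1f rho k0 theta K s t t1 t2 (y - ln K))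
     (p2f rho k0 theta K s t t1 t2 (y - ln K)) (p3f rho k0 theta K s t t1 t2 (y - ln K)) (p4f rho k0 theta K s t t1 t2 (y - ln K)) (y - ln K).
Proof.
  intros HK H2 H12 Hs.
  assert (Ht1 : 0 < t1) by lra.
  assert (HD : forall y0, Ds (heat (t1 - t2) (L1 rho k0 theta (heat t2 (payoff K)))) y0 s =
     phi t1 (y0 - ln K) s * (Sf t1 (y0 - ln K) s * R1f rho k0 theta K s t t1 t2 (y0 - ln K)
                             + dR1f rho k0 theta K s t t1 t2 (y0 - ln K))).
  { intros y0. unfold Ds. apply deriv1_is.
    apply is_derive_ext_loc with (fun u => phi t1 (y0 - ln K) u * R1f rho k0 theta K u t t1 t2 (y0 - ln K)).
    { apply (filter_imp (fun u => 0 < u)); [| apply loc_pos; lra].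
      intros u Hu. symmetry. apply stage2; lra. }
    unfold R1f, dR1f. auto_derive.
    - apply ex_phi_s; lra.
    - rewrite Derive_phi_s by lra. toR. unfold Rminus. field. lra. }
  unfold L1 at 1. unfold Defs.Dx.
  set (f := heat (t1 - t2) (L1 rho k0 theta (heat t2 (payoff K)))) in *.
  rewrite (functional_extensionality (fun y0 => Ds f y0 s) _ HD).
  rewrite HD.
  eassert (Hd : is_derive (fun y0 => phi t1 (y0 - ln K) s * (Sf t1 (y0 - ln K) s * R1f rho k0 theta K s t t1 t2 (y0 - ln K)
                             + dR1f rho k0 theta K s t t1 t2 (y0 - ln K))) y _).
  { unfold Sf, D1, R1f, dR1f. auto_derive. apply ex_phi_z; lra. reflexivity. }
  erewrite (deriv1_is (fun y0 : R => phi t1 (y0 - ln K) s * (Sf t1 (y0 - ln K) s * R1f rho k0 theta K s t t1 t2 (y0 - ln K)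
                             + dR1f rho k0 theta K s t t1 t2 (y0 - ln K)))); [| exact Hd].
  rewrite Derive_phi_z by lra. unfold Sf, D1, R1f, dR1f, Pol, p0f, p1f, p2f, p3f, p4f.
  toR. unfold Rminus. field. lra.
Qed.

Lemma s2t_ne s a b : 0 < s -> 0 < a + b -> s ^ 2 * a + s ^ 2 * b <> 0.
Proof.
  intros. replace (s ^ 2 * a + s ^ 2 * b) with (s ^ 2 * (a + b)) by ring.
  apply Rgt_not_eq, Rmult_lt_0_compat; [apply pow_lt|]; lra.
Qed.

Lemma stage4 K rho k0 theta t t1 t2 x s : 0 < K -> 0 < t2 -> t2 < t1 -> t1 < t -> 0 < s ->
  heat (t - t1) (L1 rho k0 theta (heat (t1 - t2) (L1 rho k0 theta (heat t2 (payoff K))))) x s =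
  phi t (x - ln K) s * J3f rho k0 theta K s t t1 t2 (x - ln K).
Proof.
  intros HK H2 H12 H1t Hs.
  rewrite (heat_conv (t - t1) t1 (ln K) (p0f rho k0 theta K s t t1 t2 0) (p1f rho k0 theta K s t t1 t2 0)
    (p2f rho k0 theta K s t t1 t2 0) (p3f rho k0 theta K s t t1 t2 0) (p4f rho k0 theta K s t t1 t2 0)) by
    (try lra; intros y0; apply (stage3 K rho k0 theta t t1 t2); lra).
  replace (t - t1 + t1) with t by ring.
  unfold convres, p0f, p1f, p2f, p3f, p4f, J3f. toR. field.
  repeat split; try lra. apply s2t_ne; lra.
Qed.

Lemma stageL2 K t t1 x s : 0 < K -> 0 < t1 -> t1 < t -> 0 < s ->
  heat (t - t1) (L2 (heat t1 (payoff K))) x s =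
  phi t (x - ln K) s * J2f 0 0 0 K s t t1 0 (x - ln K).
Proof.
  intros HK H1 H1t Hs.
  rewrite (heat_conv (t - t1) t1 (ln K) (- s ^ 4 * t1 ^ 2 * K / 8) 0 (K / 2) 0 0) by
    (try lra; intros y0; apply L2_stage1; lra).
  replace (t - t1 + t1) with t by ring.
  unfold convres, J2f. toR. field.
  repeat split; try lra. apply s2t_ne; lra.
Qed.

Definition g0 (w : R) := exp (- (w ^ 2) / 2).

Lemma nd_step (P : R -> R) (dP : R -> R) :
  (forall z, is_derive P z (dP z)) ->
  (fun z => deriv1 (fun w => P w * g0 w) z) = (fun z => (dP z - z * P z) * g0 z).
Proof.
  intros HP. apply functional_extensionality. intros z. apply deriv1_is.
  unfold g0. auto_derive. exists (dP z); apply HP.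
  replace (Derive (fun x => P x) z) with (dP z) by (symmetry; apply is_derive_unique, HP). toR. unfold Rminus, Rdiv. field.
Qed.

Lemma nd1 : nderiv 1 (fun w => exp (- (w ^ 2) / 2)) = (fun z => (- z) * g0 z).
Proof.
  simpl. rewrite (functional_extensionality (fun w => exp (- (w ^ 2) / 2)) (fun w => 1 * g0 w)).
  2: { intros; unfold g0; ring. }
  rewrite (nd_step (fun _ => 1) (fun _ => 0)). apply functional_extensionality; intros; ring.
  intros; auto_derive; auto.
Qed.

Lemma nd2 : nderiv 2 (fun w => exp (- (w ^ 2) / 2)) = (fun z => (z ^ 2 - 1) * g0 z).
Proof.
  change (nderiv 2 (fun w => exp (- (w ^ 2) / 2))) with (fun z => deriv1 (nderiv 1 (fun w => exp (- (w ^ 2) / 2))) z).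
  rewrite nd1. rewrite (nd_step (fun z => - z) (fun _ => -1)). apply functional_extensionality; intros; ring.
  intros; auto_derive; auto.
Qed.

Lemma nd3 : nderiv 3 (fun w => exp (- (w ^ 2) / 2)) = (fun z => (- z ^ 3 + 3 * z) * g0 z).
Proof.
  change (nderiv 3 (fun w => exp (- (w ^ 2) / 2))) with (fun z => deriv1 (nderiv 2 (fun w => exp (- (w ^ 2) / 2))) z).
  rewrite nd2. rewrite (nd_step (fun z => z ^ 2 - 1) (fun z => 2 * z)). apply functional_extensionality; intros; ring.
  intros; auto_derive; auto; ring.
Qed.

Lemma nd4 : nderiv 4 (fun w => exp (- (w ^ 2) / 2)) = (fun z => (z ^ 4 - 6 * z ^ 2 + 3) * g0 z).
Proof.
  change (nderiv 4 (fun w => exp (- (w ^ 2) / 2))) with (fun z => deriv1 (nderiv 3 (fun w => exp (- (w ^ 2) / 2))) z).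
  rewrite nd3. rewrite (nd_step (fun z => - z ^ 3 + 3 * z) (fun z => - 3 * z ^ 2 + 3)). apply functional_extensionality; intros; ring.
  intros; auto_derive; auto; ring.
Qed.

Lemma g0_inv z : exp (z ^ 2 / 2) * g0 z = 1.
Proof. unfold g0. rewrite <- exp_plus. replace (z ^ 2 / 2 + - z ^ 2 / 2) with 0 by field. apply exp_0. Qed.

Lemma Hermite0 z : Hermite 0 z = 1.
Proof. unfold Hermite. simpl nderiv. fold (g0 z). rewrite <- (g0_inv z). simpl. ring. Qed.
Lemma Hermite1 z : Hermite 1 z = z.
Proof. unfold Hermite. rewrite nd1. pose proof (g0_inv z). simpl. transitivity (z * (exp (z ^ 2 / 2) * g0 z)). ring. rewrite H; ring. Qed.
Lemma Hermite2 z : Hermite 2 z = z ^ 2 - 1.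
Proof. unfold Hermite. rewrite nd2. pose proof (g0_inv z). transitivity ((z ^ 2 - 1) * (exp (z ^ 2 / 2) * g0 z)). simpl; ring. rewrite H; ring. Qed.
Lemma Hermite3 z : Hermite 3 z = z ^ 3 - 3 * z.
Proof. unfold Hermite. rewrite nd3. pose proof (g0_inv z). transitivity ((z ^ 3 - 3 * z) * (exp (z ^ 2 / 2) * g0 z)). simpl; ring. rewrite H; ring. Qed.
Lemma Hermite4 z : Hermite 4 z = z ^ 4 - 6 * z ^ 2 + 3.
Proof. unfold Hermite. rewrite nd4. pose proof (g0_inv z). transitivity ((z ^ 4 - 6 * z ^ 2 + 3) * (exp (z ^ 2 / 2) * g0 z)). simpl; ring. rewrite H; ring. Qed.

Lemma is_RInt_poly (F f : R -> R) a b : a <= b ->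
  (forall x, is_derive F x (f x)) -> (forall x, continuous f x) -> is_RInt f a b (F b - F a).
Proof.
  intros Hab HD HC. apply (is_RInt_derive F f); intros; auto.
Qed.

Lemma F2_val K t rho k0 theta x s : 0 < K -> 0 < t -> 0 < s ->
  F2 rho k0 theta t K x s = phi t (x - ln K) s * Ff rho k0 theta K s t 0 0 (x - ln K).
Proof.
  intros HK Ht Hs. unfold F2.
  set (X := x - ln K). set (ph := phi t X s).
  rewrite (int_ab_open _ (fun t1 => ph * J2f 0 0 0 K s t t1 0 X) 0 t
     (ph * G2f 0 0 0 K s t t 0 X - ph * G2f 0 0 0 K s t 0 0 X)).
  2: lra.
  2: { intros t1 Ht1. unfold ph, X. apply stageL2; lra. }
  2: { apply (is_RInt_poly (fun t1 => ph * G2f 0 0 0 K s t t1 0 X)). lra.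
       - intros; unfold G2f, J2f; auto_derive; auto. toR. field. lra.
       - intros; apply cont_ed; unfold J2f; auto_derive; repeat split; lra. }
  rewrite (int_ab_open _ (fun t1 => ph * I3f rho k0 theta K s t t1 0 X) 0 t
     (ph * G3f rho k0 theta K s t t 0 X - ph * G3f rho k0 theta K s t 0 0 X)).
  2: lra.
  2: { intros t1 Ht1.
       apply (int_ab_open _ (fun t2 => ph * J3f rho k0 theta K s t t1 t2 X) 0 t1).
       - lra.
       - intros t2 Ht2. unfold ph, X. apply stage4; lra.
       - replace (ph * I3f rho k0 theta K s t t1 0 X) with
           (ph * H3f rho k0 theta K s t t1 t1 X - ph * H3f rho k0 theta K s t t1 0 X)
           by (unfold H3f, I3f; field; lra).
         apply (is_RInt_poly (fun t2 => ph * H3f rho k0 theta K s t t1 t2 X)). lra.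
         + intros; unfold H3f, J3f; auto_derive; auto. toR. field. repeat split; lra.
         + intros; apply cont_ed; unfold J3f; auto_derive; repeat split; lra. }
  2: { apply (is_RInt_poly (fun t1 => ph * G3f rho k0 theta K s t t1 0 X)). lra.
       - intros; unfold G3f, I3f; auto_derive; auto. toR. field. repeat split; lra.
       - intros; apply cont_ed; unfold I3f; auto_derive; repeat split; lra. }
  unfold G2f, G3f, Ff. field. repeat split; lra.
Qed.

Theorem mainTheorem3 (K t rho k0 theta : R) (hK : 0 < K) (ht : 0 < t) :
  forall x s : R, 0 < s ->
    F1 rho k0 theta t K x s
      = K * t / 2 * (k0 * (theta - s) * sqrt t - rho * s * d_minus K t x s)
        * Nprime (d_minus K t x s)
    /\
    F2 rho k0 theta t K x s
      = K * sum_f_R0 (fun i => a2 rho k0 theta t s i * (- / (s * sqrt t)) ^ i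
                               * Hermite i (d_minus K t x s)
                               * (Nprime (d_minus K t x s) / (s * sqrt t))) 4.
Proof.
  intros x s Hs. split.
  - apply F1_val; auto.
  - rewrite F2_val by auto.
    simpl sum_f_R0.
    rewrite Hermite0, Hermite1, Hermite2, Hermite3, Hermite4.
    rewrite Nprime_phi by auto.
    unfold a2, d_minus, Ff.
    set (ph := phi t (x - ln K) s). set (X := x - ln K).
    assert (Hq : sqrt t * sqrt t = t) by (apply sqrt_sqrt; lra).
    assert (Hq0 : 0 < sqrt t) by (apply sqrt_lt_R0; lra).
    clearbody ph X. set (q := sqrt t) in *; clearbody q. subst t.
    field. lra.
Qed.
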